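(* For $s\in\mathbb{C}$ with $s\ne1,2$, we have $\zeta(0,s)=2\,\zeta(-1,s+1)$.
   Context: For an integer $c\ge 0$, $\zeta(-c,s+c)$ denotes the Euler–Zagier double zeta function $\zeta(s_1,s_2)=\sum_{1\le n_1<n_2} n_1^{-s_1}n_2^{-s_2}$ evaluated at $(s_1,s_2)=(-c,s+c)$; i.e. it is the meromorphic continuation to all $s\in\mathbb{C}$ of the series $\sum_{m,n\ge1} m^{c}(m+n)^{-s-c}$, which converges absolutely for $\Re(s)>2$. *)

(* Defs.v *)
From Stdlib Require Import Reals.
From Coquelicot Require Import Coquelicot.
Open Scope R_scope.

(* n^{-s} for a positive integer n and complex s, with the real logarithm:
   n^{-s} = exp(-Re s * ln n) * (cos(Im s * ln n) - i sin(Im s * ln n)). *)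
Definition npow_neg (n : nat) (s : C) : C :=
  Cmult (RtoC (exp (- Re s * ln (INR n))))
        (cos (Im s * ln (INR n)), - sin (Im s * ln (INR n))).

(* General term m^c (m+n)^{-(s+c)} of sum_{m,n>=1} m^c (m+n)^{-s-c}, indexed by
   m = i+1, n = j+1. *)
Definition dz_term (c : nat) (s : C) (i j : nat) : C :=
  Cmult (RtoC (INR (S i) ^ c)) (npow_neg (S i + S j) (Cplus s (RtoC (INR c)))).

(* v is the value of the (absolutely convergent, for Re s > 2) double series,
   computed as an iterated sum. *)
Definition dz_series_value (c : nat) (s : C) (v : C) : Prop :=
  exists g : nat -> C,
    (forall i, is_series (fun j => dz_term c s i j) (g i)) /\ is_series g v.

Definition C_holo_at (F : C -> C) (z : C) : Prop :=
  @ex_derive C_AbsRing C_NormedModule F z.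

(* F is the analytic continuation of s |-> zeta(-c, s+c) to C \ {1,2}:
   holomorphic there and equal to the series on Re s > 2. *)
Definition is_dz_continuation (c : nat) (F : C -> C) : Prop :=
  (forall z : C, z <> RtoC 1 -> z <> RtoC 2 -> C_holo_at F z) /\
  (forall s : C, Re s > 2 -> dz_series_value c s (F s)).

(* Main.v *)
Require Import Defs.
From Stdlib Require Import Reals Lra Lia.
From Coquelicot Require Import Coquelicot.
Open Scope R_scope.

Ltac cdes := repeat match goal with x : C |- _ => destruct x end.
Ltac cring := cdes; apply injective_projections; simpl; ring.

Lemma Cmod_CR (x : C) : @norm R_AbsRing C_R_NormedModule x = Cmod x.
Proof. destruct x as [a b]. unfold norm; simpl. unfold prod_norm; simpl.
  unfold Cmod; simpl. unfold norm; simpl. unfold abs; simpl.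
  f_equal. rewrite !Rmult_1_r. rewrite <- !Rabs_mult.
  rewrite !Rabs_right; try ring; apply Rle_ge; apply Rle_0_sqr.
Qed.

Lemma Cmod_abs (x : C) : @abs C_AbsRing x = Cmod x.
Proof. reflexivity. Qed.

Definition Cdiffeps (f : C -> C) (w l : C) :=
  forall eps, 0 < eps -> exists d, 0 < d /\ forall v, Cmod (v - w) < d ->
    Cmod (f v - f w - (v - w) * l) <= eps * Cmod (v - w).

Lemma is_derive_eps f w l : @is_derive C_AbsRing C_NormedModule f w l -> Cdiffeps f w l.
Proof.
  intros [_ H] eps Heps.
  specialize (H w (fun P HP => HP) (mkposreal eps Heps)).
  destruct H as [d Hd]. exists d. split. apply cond_pos.
  intros v Hv. specialize (Hd v Hv). simpl in Hd.
  exact Hd.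
Qed.

Lemma eps_is_derive f w l : Cdiffeps f w l -> @is_derive C_AbsRing C_NormedModule f w l.
Proof.
  intros H. split.
  - apply is_linear_scal_l.
  - intros x Hx. apply (@is_filter_lim_locally_unique C_AbsRing (AbsRing_NormedModule C_AbsRing)) in Hx. subst x.
    intros [eps Heps]. destruct (H eps Heps) as [d [Hd Hv]].
    exists (mkposreal d Hd). intros v Hb. simpl in Hb.
    apply Hv. exact Hb.
Qed.

Lemma Cmod_sub_sym (a b : C) : Cmod (a - b) = Cmod (b - a).
Proof. replace (a - b)%C with (-(b - a))%C by cring. apply Cmod_opp. Qed.

Lemma Cmod_rev_tri (a b : C) : Cmod a - Cmod b <= Cmod (a - b).
Proof. pose proof (Cmod_triangle (a - b) b). replace (a - b + b)%C with a in H by cring. lra. Qed.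

Lemma Cinv_diffeps (u : C) : u <> 0%C -> Cdiffeps Cinv u (- / (u * u))%C.
Proof.
  intros Hu eps Heps.
  assert (Hm : 0 < Cmod u) by (apply Cmod_gt_0; auto).
  exists (Rmin (Cmod u / 2) (eps * (Cmod u * Cmod u * Cmod u) / 2)).
  split. { apply Rmin_pos; [lra|]. apply Rdiv_lt_0_compat; [|lra].
    apply Rmult_lt_0_compat; auto. repeat apply Rmult_lt_0_compat; auto. }
  intros v Hv.
  assert (H1 : Cmod (v - u) < Cmod u / 2) by (eapply Rlt_le_trans; [exact Hv| apply Rmin_l]).
  assert (H2 : Cmod (v - u) < eps * (Cmod u * Cmod u * Cmod u) / 2) by (eapply Rlt_le_trans; [exact Hv| apply Rmin_r]).
  assert (Hv1 : Cmod u / 2 <= Cmod v).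
  { pose proof (Cmod_rev_tri u v). rewrite Cmod_sub_sym in H. lra. }
  assert (Hv0 : v <> 0%C). { intro E. subst v. rewrite Cmod_0 in Hv1. lra. }
  replace (/ v - / u - (v - u) * - / (u * u))%C with ((v-u)*(v-u)*/(u*u*v))%C
    by (field; split; auto).
  rewrite !Cmod_mult, Cmod_inv, !Cmod_mult.
  2:{ apply Cmult_neq_0; [apply Cmult_neq_0|]; auto. }
  assert (0 <= Cmod (v - u)) by apply Cmod_ge_0.
  assert (0 < Cmod v) by lra.
  revert H H0 H1 H2 Hv1 Hm.
  generalize (Cmod (v - u)) as a. generalize (Cmod u) as m. generalize (Cmod v) as n.
  intros n m a H H0 H1 H2 Hv1 Hm.
  assert (Hmn : 0 < m * m * n) by (repeat apply Rmult_lt_0_compat; auto).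
  rewrite Rmult_assoc. rewrite (Rmult_comm eps). apply Rmult_le_compat_l; auto.
  apply (Rmult_le_reg_r (m * m * n)); auto.
  rewrite Rmult_assoc, Rinv_l by lra. rewrite Rmult_1_r.
  apply Rle_trans with (eps * (m * m * m) / 2); [lra|].
  assert (m * m * m / 2 <= m * m * n).
  { replace (m*m*m/2) with (m*m*(m/2)) by field. apply Rmult_le_compat_l; [|lra].
    apply Rmult_le_pos; lra. }
  unfold Rdiv. rewrite Rmult_assoc. apply Rmult_le_compat_l; lra.
Qed.

Notation CK := (AbsRing_NormedModule C_AbsRing).

Lemma is_derive_eps' f w l : @is_derive C_AbsRing CK f w l -> Cdiffeps f w l.
Proof.
  intros [_ H] eps Heps.
  specialize (H w (fun P HP => HP) (mkposreal eps Heps)).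
  destruct H as [d Hd]. exists d. split. apply cond_pos.
  intros v Hv. specialize (Hd v Hv). exact Hd.
Qed.

Lemma eps_is_derive' f w l : Cdiffeps f w l -> @is_derive C_AbsRing CK f w l.
Proof.
  intros H. split.
  - apply is_linear_scal_l.
  - intros x Hx. apply (@is_filter_lim_locally_unique C_AbsRing (AbsRing_NormedModule C_AbsRing)) in Hx. subst x.
    intros [eps Heps]. destruct (H eps Heps) as [d [Hd Hv]].
    exists (mkposreal d Hd). intros v Hb. apply Hv. exact Hb.
Qed.

Lemma Cd_mult f g w a b : Cdiffeps f w a -> Cdiffeps g w b ->
  Cdiffeps (fun x => f x * g x)%C w (a * g w + f w * b)%C.
Proof.
  intros Hf Hg. apply is_derive_eps'.
  apply (@is_derive_mult C_AbsRing f g w a b); try (apply eps_is_derive'; auto).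
  intros; apply Cmult_comm.
Qed.

Lemma Cd_plus f g w a b : Cdiffeps f w a -> Cdiffeps g w b ->
  Cdiffeps (fun x => f x + g x)%C w (a + b)%C.
Proof.
  intros Hf Hg. apply is_derive_eps'.
  apply (@is_derive_plus C_AbsRing CK f g w a b); apply eps_is_derive'; auto.
Qed.

Lemma Cd_opp f w a : Cdiffeps f w a -> Cdiffeps (fun x => - f x)%C w (- a)%C.
Proof.
  intros Hf. apply is_derive_eps'.
  apply (@is_derive_opp C_AbsRing CK f w a); apply eps_is_derive'; auto.
Qed.

Lemma Cd_minus f g w a b : Cdiffeps f w a -> Cdiffeps g w b ->
  Cdiffeps (fun x => f x - g x)%C w (a - b)%C.
Proof. intros. apply Cd_plus; auto. apply Cd_opp; auto. Qed.

Lemma Cd_const c w : Cdiffeps (fun _ => c) w 0%C.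
Proof. apply is_derive_eps'. apply (@is_derive_const C_AbsRing CK c w). Qed.

Lemma Cd_id w : Cdiffeps (fun x => x) w 1%C.
Proof. apply is_derive_eps'. apply (@is_derive_id C_AbsRing w). Qed.

Lemma Cd_comp f g w a b : Cdiffeps f (g w) a -> Cdiffeps g w b ->
  Cdiffeps (fun x => f (g x)) w (b * a)%C.
Proof.
  intros Hf Hg. apply is_derive_eps'.
  apply (@is_derive_comp C_AbsRing CK f g w a b); apply eps_is_derive'; auto.
Qed.

Lemma Cd_inv g w b : Cdiffeps g w b -> g w <> 0%C ->
  Cdiffeps (fun x => / g x)%C w (b * - / (g w * g w))%C.
Proof. intros Hg Hn. apply (Cd_comp Cinv g); auto. apply Cinv_diffeps; auto. Qed.

Lemma Cmod_sub_self (w : C) : Cmod (w - w) = 0.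
Proof. destruct w as [a b]. unfold Cmod; simpl. replace (a + - a) with 0 by ring.
  replace (b + - b) with 0 by ring. transitivity (sqrt 0); [f_equal; ring | apply sqrt_0]. Qed.

Lemma Cd_ext_loc f g w a d : 0 < d -> (forall v, Cmod (v - w) < d -> f v = g v) ->
  Cdiffeps f w a -> Cdiffeps g w a.
Proof.
  intros Hd He Hf eps Heps. destruct (Hf eps Heps) as [d1 [Hd1 H1]].
  exists (Rmin d d1). split. apply Rmin_pos; auto.
  intros v Hv.
  assert (HE1 : f v = g v) by (apply He; eapply Rlt_le_trans; [exact Hv| apply Rmin_l]).
  assert (HE2 : f w = g w) by (apply He; rewrite Cmod_sub_self; auto).
  rewrite <- HE1, <- HE2.
  apply H1. eapply Rlt_le_trans; [exact Hv| apply Rmin_r].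
Qed.

Definition Cdiff f w := exists l, Cdiffeps f w l.

Lemma holo_Cdiff f w : @ex_derive C_AbsRing C_NormedModule f w -> Cdiff f w.
Proof. intros [l Hl]. exists l. apply is_derive_eps. exact Hl. Qed.

Definition Ccont (f : C -> C) (w : C) := forall eps, 0 < eps -> exists d, 0 < d /\
  forall v, Cmod (v - w) < d -> Cmod (f v - f w) < eps.

Lemma Cdiff_cont f w : Cdiff f w -> Ccont f w.
Proof.
  intros [l Hl] eps Heps.
  destruct (Hl 1 Rlt_0_1) as [d [Hd H]].
  exists (Rmin d (eps / (Cmod l + 1))). split.
  { apply Rmin_pos; auto. apply Rdiv_lt_0_compat; auto. pose proof (Cmod_ge_0 l). lra. }
  intros v Hv.
  assert (Hv1 : Cmod (v - w) < d) by (eapply Rlt_le_trans; [exact Hv| apply Rmin_l]).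
  assert (Hv2 : Cmod (v - w) < eps / (Cmod l + 1)) by (eapply Rlt_le_trans; [exact Hv| apply Rmin_r]).
  specialize (H v Hv1).
  replace (f v - f w)%C with ((f v - f w - (v - w) * l) + (v - w) * l)%C by cring.
  eapply Rle_lt_trans. apply Cmod_triangle. rewrite Cmod_mult.
  pose proof (Cmod_ge_0 l). pose proof (Cmod_ge_0 (v - w)).
  apply (Rmult_lt_compat_r (Cmod l + 1)) in Hv2; [|lra].
  unfold Rdiv in Hv2. rewrite Rmult_assoc, Rinv_l in Hv2 by lra. nra.
Qed.

Notation CR := C_R_CompleteNormedModule.
Definition CI (g : R -> C) (a b : R) : C := @RInt CR g a b.
Definition cex (g : R -> C) (a b : R) : Prop := @ex_RInt CR g a b.
Definition cis (g : R -> C) (a b : R) (l : C) : Prop := @is_RInt CR g a b l.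

Lemma Rabs_fst_le (z : C) : Rabs (fst z) <= Cmod z.
Proof. pose proof (Rmax_Cmod z). eapply Rle_trans; [apply Rmax_l|exact H]. Qed.
Lemma Rabs_snd_le (z : C) : Rabs (snd z) <= Cmod z.
Proof. pose proof (Rmax_Cmod z). eapply Rle_trans; [apply Rmax_r|exact H]. Qed.

Lemma Cmod_pair_le (a b : R) : Cmod (a, b) <= Rabs a + Rabs b.
Proof.
  replace (a, b) with ((a, 0) + (0, b))%C by cring.
  eapply Rle_trans. apply Cmod_triangle.
  change (a, 0) with (RtoC a). rewrite Cmod_R.
  replace (0, b) with (Ci * RtoC b)%C by cring. rewrite Cmod_mult, Cmod_R.
  replace (Cmod Ci) with 1. lra. unfold Cmod; simpl. transitivity (sqrt 1); [symmetry; apply sqrt_1| f_equal; ring].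
Qed.

Lemma Cmod_sub_pair (a b c d : R) : Cmod ((a, b) - (c, d))%C <= Rabs (a - c) + Rabs (b - d).
Proof. replace ((a, b) - (c, d))%C with (a - c, b - d) by cring. apply Cmod_pair_le. Qed.

Lemma cont_path (f : C -> C) (p : R -> C) (t : R) :
  (forall eps, 0 < eps -> exists d, 0 < d /\ forall s, Rabs (s - t) < d -> Cmod (p s - p t) < eps) ->
  Ccont f (p t) -> @continuous R_UniformSpace CR (fun s => f (p s)) t.
Proof.
  intros Hp Hf. apply (proj2 (filterlim_locally _ _)).
  intros [eps Heps]. destruct (Hf eps Heps) as [d [Hd H]].
  destruct (Hp d Hd) as [d2 [Hd2 H2]].
  exists (mkposreal d2 Hd2). intros s Hs. simpl in Hs.
  unfold ball in Hs; simpl in Hs; unfold AbsRing_ball, abs, minus, plus, opp in Hs; simpl in Hs.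
  specialize (H _ (H2 s Hs)).
  split; simpl; unfold AbsRing_ball, abs, minus, plus, opp; simpl.
  - apply Rle_lt_trans with (Cmod (f (p s) - f (p t))%C); [|exact H]. exact (Rabs_fst_le (f (p s) - f (p t))%C).
  - apply Rle_lt_trans with (Cmod (f (p s) - f (p t))%C); [|exact H]. exact (Rabs_snd_le (f (p s) - f (p t))%C).
Qed.

Lemma hpath_cont y t : forall eps, 0 < eps -> exists d, 0 < d /\ forall s, Rabs (s - t) < d -> Cmod ((s, y) - (t, y))%C < eps.
Proof. intros eps He. exists eps. split; auto. intros s Hs. eapply Rle_lt_trans. apply Cmod_sub_pair.
  replace (y - y) with 0 by ring. rewrite Rabs_R0. lra. Qed.
Lemma vpath_cont x t : forall eps, 0 < eps -> exists d, 0 < d /\ forall s, Rabs (s - t) < d -> Cmod ((x, s) - (x, t))%C < eps.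
Proof. intros eps He. exists eps. split; auto. intros s Hs. eapply Rle_lt_trans. apply Cmod_sub_pair.
  replace (x - x) with 0 by ring. rewrite Rabs_R0. lra. Qed.

Lemma cex_h f a b y : a <= b -> (forall t, a <= t <= b -> Ccont f (t, y)) -> cex (fun t => f (t, y)) a b.
Proof.
  intros Hab H. apply ex_RInt_continuous. intros z Hz.
  rewrite Rmin_left, Rmax_right in Hz by auto.
  apply (cont_path f (fun s => (s, y))). apply hpath_cont. apply H; auto.
Qed.
Lemma cex_v f c d x : c <= d -> (forall t, c <= t <= d -> Ccont f (x, t)) -> cex (fun t => f (x, t)) c d.
Proof.
  intros Hab H. apply ex_RInt_continuous. intros z Hz.
  rewrite Rmin_left, Rmax_right in Hz by auto.
  apply (cont_path f (fun s => (x, s))). apply vpath_cont. apply H; auto.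
Qed.

Lemma CI_correct g a b : cex g a b -> cis g a b (CI g a b).
Proof. intros. unfold CI. apply (@RInt_correct CR). auto. Qed.
Lemma CI_unique g a b l : cis g a b l -> CI g a b = l.
Proof. intros. unfold CI. apply (@is_RInt_unique CR). auto. Qed.

Lemma CI_chasles g a b c : cex g a b -> cex g b c -> CI g a c = (CI g a b + CI g b c)%C.
Proof. intros. unfold CI. rewrite <- (@RInt_Chasles CR g a b c); auto. Qed.

Lemma cis_plus f g a b l1 l2 : cis f a b l1 -> cis g a b l2 -> cis (fun t => f t + g t)%C a b (l1 + l2)%C.
Proof. intros. apply (@is_RInt_plus CR); auto. Qed.
Lemma cis_minus f g a b l1 l2 : cis f a b l1 -> cis g a b l2 -> cis (fun t => f t - g t)%C a b (l1 - l2)%C.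
Proof. intros. apply (@is_RInt_minus CR); auto. Qed.
Lemma cis_ext f g a b l : (forall t, f t = g t) -> cis f a b l -> cis g a b l.
Proof. intros. apply (@is_RInt_ext CR f); auto. Qed.
Lemma cis_const v a b : cis (fun _ => v) a b (RtoC (b - a) * v)%C.
Proof. assert (H := @is_RInt_const CR a b v). unfold cis.
  replace (RtoC (b - a) * v)%C with (@scal _ CR (b - a) v). exact H.
  destruct v; unfold scal; simpl; unfold prod_scal; simpl. unfold scal; simpl; unfold mult; simpl.
  apply injective_projections; simpl; ring. Qed.

Lemma cis_fst g a b l : cis g a b l -> is_RInt (fun t => fst (g t)) a b (fst l).
Proof. intros H. apply (@is_RInt_fct_extend_fst R_NormedModule R_NormedModule g a b l H). Qed.
Lemma cis_snd g a b l : cis g a b l -> is_RInt (fun t => snd (g t)) a b (snd l).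
Proof. intros H. apply (@is_RInt_fct_extend_snd R_NormedModule R_NormedModule g a b l H). Qed.
Lemma cis_pair g a b l1 l2 : is_RInt (fun t => fst (g t)) a b l1 -> is_RInt (fun t => snd (g t)) a b l2 -> cis g a b (l1, l2).
Proof. intros H1 H2. apply (@is_RInt_fct_extend_pair R_NormedModule R_NormedModule g a b l1 l2 H1 H2). Qed.

Lemma cis_cmul c g a b l : cis g a b l -> cis (fun t => c * g t)%C a b (c * l)%C.
Proof.
  intros H. destruct c as [c1 c2].
  pose proof (cis_fst _ _ _ _ H) as H1. pose proof (cis_snd _ _ _ _ H) as H2.
  assert (HA := @is_RInt_scal R_NormedModule _ _ _ c1 _ H1).
  assert (HB := @is_RInt_scal R_NormedModule _ _ _ c2 _ H2).
  assert (HC := @is_RInt_scal R_NormedModule _ _ _ c1 _ H2).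
  assert (HD := @is_RInt_scal R_NormedModule _ _ _ c2 _ H1).
  assert (E1 := @is_RInt_minus R_NormedModule _ _ _ _ _ _ HA HB).
  assert (E2 := @is_RInt_plus R_NormedModule _ _ _ _ _ _ HC HD).
  replace ((c1, c2) * l)%C with (minus (scal c1 (fst l)) (scal c2 (snd l)) : R, plus (scal c1 (snd l)) (scal c2 (fst l)) : R).
  2:{ destruct l. unfold minus, plus, scal, opp; simpl. unfold mult; simpl. apply injective_projections; simpl; ring. }
  apply cis_pair.
  - eapply (@is_RInt_ext R_NormedModule); [|exact E1]. intros t _. simpl. unfold minus, plus, scal, opp; simpl. unfold mult; simpl. ring.
  - eapply (@is_RInt_ext R_NormedModule); [|exact E2]. intros t _. simpl. unfold minus, plus, scal, opp; simpl. unfold mult; simpl. ring.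
Qed.

Lemma cis_bound g a b l M : a <= b -> (forall t, a <= t <= b -> Cmod (g t) <= M) -> cis g a b l -> Cmod l <= (b - a) * M.
Proof.
  intros Hab H Hl. rewrite <- Cmod_CR. apply (@norm_RInt_le_const CR g a b l M Hab); auto.
  intros t Ht. rewrite Cmod_CR. auto.
Qed.

Definition hI (f : C -> C) (a b y : R) : C := CI (fun t => f (t, y)) a b.
Definition vI (f : C -> C) (c d x : R) : C := CI (fun t => f (x, t)) c d.
Definition rI (f : C -> C) (a b c d : R) : C := (hI f a b c - hI f a b d + Ci * (vI f c d b - vI f c d a))%C.

Definition rcont (f : C -> C) (a b c d : R) := forall t s, a <= t <= b -> c <= s <= d -> Ccont f (t, s).
Definition bcont (f : C -> C) (a b c d : R) :=
  (forall t, a <= t <= b -> Ccont f (t, c) /\ Ccont f (t, d)) /\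
  (forall s, c <= s <= d -> Ccont f (a, s) /\ Ccont f (b, s)).

Lemma rcont_bcont f a b c d : a <= b -> c <= d -> rcont f a b c d -> bcont f a b c d.
Proof. intros Hab Hcd H. split; intros; split; apply H; lra. Qed.

Lemma rI_vsplit f a m b c d : a <= m -> m <= b -> c <= d -> rcont f a b c d ->
  rI f a b c d = (rI f a m c d + rI f m b c d)%C.
Proof.
  intros H1 H2 H3 H. unfold rI, hI, vI.
  rewrite (CI_chasles (fun t => f (t, c)) a m b), (CI_chasles (fun t => f (t, d)) a m b).
  ring.
  all: apply (cex_h f); auto; intros; apply H; lra.
Qed.

Lemma rI_hsplit f a b c n d : c <= n -> n <= d -> a <= b -> rcont f a b c d ->
  rI f a b c d = (rI f a b c n + rI f a b n d)%C.
Proof.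
  intros H1 H2 H3 H. unfold rI, hI, vI.
  rewrite (CI_chasles (fun t => f (b, t)) c n d), (CI_chasles (fun t => f (a, t)) c n d).
  ring.
  all: apply (cex_v f); auto; intros; apply H; lra.
Qed.

Lemma hI_plus f g a b y : a <= b -> (forall t, a <= t <= b -> Ccont f (t, y) /\ Ccont g (t, y)) ->
  hI (fun w => f w + g w)%C a b y = (hI f a b y + hI g a b y)%C.
Proof. intros Hab H. unfold hI. apply CI_unique. apply cis_plus; apply CI_correct; apply cex_h; auto; apply H. Qed.
Lemma vI_plus f g c d x : c <= d -> (forall t, c <= t <= d -> Ccont f (x, t) /\ Ccont g (x, t)) ->
  vI (fun w => f w + g w)%C c d x = (vI f c d x + vI g c d x)%C.
Proof. intros Hab H. unfold vI. apply CI_unique. apply cis_plus; apply CI_correct; apply cex_v; auto; apply H. Qed.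
Lemma hI_minus f g a b y : a <= b -> (forall t, a <= t <= b -> Ccont f (t, y) /\ Ccont g (t, y)) ->
  hI (fun w => f w - g w)%C a b y = (hI f a b y - hI g a b y)%C.
Proof. intros Hab H. unfold hI. apply CI_unique. apply cis_minus; apply CI_correct; apply cex_h; auto; apply H. Qed.
Lemma vI_minus f g c d x : c <= d -> (forall t, c <= t <= d -> Ccont f (x, t) /\ Ccont g (x, t)) ->
  vI (fun w => f w - g w)%C c d x = (vI f c d x - vI g c d x)%C.
Proof. intros Hab H. unfold vI. apply CI_unique. apply cis_minus; apply CI_correct; apply cex_v; auto; apply H. Qed.
Lemma hI_cmul k f a b y : a <= b -> (forall t, a <= t <= b -> Ccont f (t, y)) ->
  hI (fun w => k * f w)%C a b y = (k * hI f a b y)%C.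
Proof. intros Hab H. unfold hI. apply CI_unique. apply cis_cmul; apply CI_correct; apply cex_h; auto. Qed.
Lemma vI_cmul k f c d x : c <= d -> (forall t, c <= t <= d -> Ccont f (x, t)) ->
  vI (fun w => k * f w)%C c d x = (k * vI f c d x)%C.
Proof. intros Hab H. unfold vI. apply CI_unique. apply cis_cmul; apply CI_correct; apply cex_v; auto. Qed.

Lemma rI_plus f g a b c d : a <= b -> c <= d -> bcont f a b c d -> bcont g a b c d ->
  rI (fun w => f w + g w)%C a b c d = (rI f a b c d + rI g a b c d)%C.
Proof.
  intros Hab Hcd [Hf1 Hf2] [Hg1 Hg2]. unfold rI.
  rewrite !hI_plus, !vI_plus; auto; try ring;
  intros t Ht; specialize (Hf1 t); specialize (Hf2 t); specialize (Hg1 t); specialize (Hg2 t); tauto.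
Qed.
Lemma rI_minus f g a b c d : a <= b -> c <= d -> bcont f a b c d -> bcont g a b c d ->
  rI (fun w => f w - g w)%C a b c d = (rI f a b c d - rI g a b c d)%C.
Proof.
  intros Hab Hcd [Hf1 Hf2] [Hg1 Hg2]. unfold rI.
  rewrite !hI_minus, !vI_minus; auto; try ring;
  intros t Ht; specialize (Hf1 t); specialize (Hf2 t); specialize (Hg1 t); specialize (Hg2 t); tauto.
Qed.
Lemma rI_cmul k f a b c d : a <= b -> c <= d -> bcont f a b c d ->
  rI (fun w => k * f w)%C a b c d = (k * rI f a b c d)%C.
Proof.
  intros Hab Hcd [Hf1 Hf2]. unfold rI.
  rewrite !hI_cmul, !vI_cmul; auto; try ring;
  intros t Ht; specialize (Hf1 t); specialize (Hf2 t); tauto.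
Qed.

Lemma rI_ext (f g : C -> C) a b c d : a <= b -> c <= d ->
  (forall t, a <= t <= b -> f (t, c) = g (t, c) /\ f (t, d) = g (t, d)) ->
  (forall s, c <= s <= d -> f (a, s) = g (a, s) /\ f (b, s) = g (b, s)) ->
  rI f a b c d = rI g a b c d.
Proof.
  intros Hab Hcd H1 H2. unfold rI, hI, vI, CI.
  rewrite (@RInt_ext CR (fun t => f (t, c)) (fun t => g (t, c))),
          (@RInt_ext CR (fun t => f (t, d)) (fun t => g (t, d))),
          (@RInt_ext CR (fun t => f (a, t)) (fun t => g (a, t))),
          (@RInt_ext CR (fun t => f (b, t)) (fun t => g (b, t))). reflexivity.
  all: intros x Hx; rewrite ?Rmin_left, ?Rmax_right in Hx by lra;
    first [apply H1 | apply H2]; lra.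
Qed.

Lemma hI_bound f a b y M : a <= b -> (forall t, a <= t <= b -> Ccont f (t, y) /\ Cmod (f (t, y)) <= M) ->
  Cmod (hI f a b y) <= (b - a) * M.
Proof. intros Hab H. unfold hI. apply (cis_bound (fun t => f (t, y))); auto. intros; apply H; auto.
  apply CI_correct, cex_h; auto; apply H. Qed.
Lemma vI_bound f c d x M : c <= d -> (forall t, c <= t <= d -> Ccont f (x, t) /\ Cmod (f (x, t)) <= M) ->
  Cmod (vI f c d x) <= (d - c) * M.
Proof. intros Hab H. unfold vI. apply (cis_bound (fun t => f (x, t))); auto. intros; apply H; auto.
  apply CI_correct, cex_v; auto; apply H. Qed.

Lemma Cmod_Ci : Cmod Ci = 1.
Proof. unfold Cmod; simpl. transitivity (sqrt 1); [f_equal; ring| apply sqrt_1]. Qed.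

Lemma Cmod_tri4 (p q r s : C) : Cmod (p - q + Ci * (r - s))%C <= Cmod p + Cmod q + Cmod r + Cmod s.
Proof.
  eapply Rle_trans. apply Cmod_triangle. rewrite Cmod_mult, Cmod_Ci, Rmult_1_l.
  unfold Cminus. pose proof (Cmod_triangle p (- q)). pose proof (Cmod_triangle r (- s)).
  rewrite Cmod_opp in H, H0. lra.
Qed.

Lemma rI_bound f a b c d M : a <= b -> c <= d -> bcont f a b c d ->
  (forall t, a <= t <= b -> Cmod (f (t, c)) <= M /\ Cmod (f (t, d)) <= M) ->
  (forall s, c <= s <= d -> Cmod (f (a, s)) <= M /\ Cmod (f (b, s)) <= M) ->
  Cmod (rI f a b c d) <= 2 * ((b - a) + (d - c)) * M.
Proof.
  intros Hab Hcd [C1 C2] B1 B2. unfold rI.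
  eapply Rle_trans. apply Cmod_tri4.
  pose proof (hI_bound f a b c M Hab ltac:(intros t Ht; split; [apply C1|apply B1]; auto)).
  pose proof (hI_bound f a b d M Hab ltac:(intros t Ht; split; [apply C1|apply B1]; auto)).
  pose proof (vI_bound f c d b M Hcd ltac:(intros t Ht; split; [apply C2|apply B2]; auto)).
  pose proof (vI_bound f c d a M Hcd ltac:(intros t Ht; split; [apply C2|apply B2]; auto)).
  lra.
Qed.

Lemma Ccont_affine (al be w : C) : Ccont (fun v => al + v * be)%C w.
Proof.
  apply Cdiff_cont. eexists. apply Cd_plus. apply Cd_const. apply Cd_mult. apply Cd_id. apply Cd_const.
Qed.

Lemma rI_affine al be a b c d : a <= b -> c <= d -> rI (fun v => al + v * be)%C a b c d = 0%C.
Proof.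
  intros Hab Hcd. unfold rI.
  set (f := (fun v => al + v * be)%C).
  assert (E1 : (hI f a b c - hI f a b d)%C = (RtoC (b - a) * ((0, (c - d)%R) * be))%C).
  { unfold hI. transitivity (CI (fun t => f (t, c) - f (t, d))%C a b).
    symmetry; apply CI_unique; apply cis_minus; apply CI_correct; apply (cex_h f); auto; intros; apply Ccont_affine.
    apply CI_unique. eapply cis_ext; [|apply cis_const]. intros t. unfold f. cring. }
  assert (E2 : (vI f c d b - vI f c d a)%C = (RtoC (d - c) * (((b - a)%R, 0) * be))%C).
  { unfold vI. transitivity (CI (fun t => f (b, t) - f (a, t))%C c d).
    symmetry; apply CI_unique; apply cis_minus; apply CI_correct; apply (cex_v f); auto; intros; apply Ccont_affine.
    apply CI_unique. eapply cis_ext; [|apply cis_const]. intros t. unfold f. cring. }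
  rewrite E1, E2. cring.
Qed.

Record rect := mkR { ra : R; rb : R; rc : R; rd : R }.
Definition RIq f q := rI f (ra q) (rb q) (rc q) (rd q).
Definition q1 q := mkR (ra q) ((ra q + rb q)/2) (rc q) ((rc q + rd q)/2).
Definition q2 q := mkR ((ra q + rb q)/2) (rb q) (rc q) ((rc q + rd q)/2).
Definition q3 q := mkR (ra q) ((ra q + rb q)/2) ((rc q + rd q)/2) (rd q).
Definition q4 q := mkR ((ra q + rb q)/2) (rb q) ((rc q + rd q)/2) (rd q).

Definition best2 f p q := if Rle_dec (Cmod (RIq f p)) (Cmod (RIq f q)) then q else p.
Definition pick f q := best2 f (best2 f (q1 q) (q2 q)) (best2 f (q3 q) (q4 q)).

Lemma best2_ge f p q : Cmod (RIq f p) <= Cmod (RIq f (best2 f p q)) /\ Cmod (RIq f q) <= Cmod (RIq f (best2 f p q)).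
Proof. unfold best2. destruct Rle_dec; lra. Qed.
Lemma best2_in f p q : best2 f p q = p \/ best2 f p q = q.
Proof. unfold best2. destruct Rle_dec; auto. Qed.

Lemma pick_in f q : pick f q = q1 q \/ pick f q = q2 q \/ pick f q = q3 q \/ pick f q = q4 q.
Proof. unfold pick. destruct (best2_in f (best2 f (q1 q) (q2 q)) (best2 f (q3 q) (q4 q))) as [E|E]; rewrite E.
  destruct (best2_in f (q1 q) (q2 q)) as [E'|E']; rewrite E'; auto.
  destruct (best2_in f (q3 q) (q4 q)) as [E'|E']; rewrite E'; auto. Qed.

Lemma pick_ge f q : Cmod (RIq f (q1 q)) + Cmod (RIq f (q2 q)) + Cmod (RIq f (q3 q)) + Cmod (RIq f (q4 q))
   <= 4 * Cmod (RIq f (pick f q)).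
Proof.
  unfold pick.
  destruct (best2_ge f (q1 q) (q2 q)). destruct (best2_ge f (q3 q) (q4 q)).
  destruct (best2_ge f (best2 f (q1 q) (q2 q)) (best2 f (q3 q) (q4 q))). lra.
Qed.

Definition inq q (w : C) := ra q <= fst w <= rb q /\ rc q <= snd w <= rd q.
Definition qok q := ra q <= rb q /\ rc q <= rd q.

Lemma quad f q : qok q -> (forall w, inq q w -> Ccont f w) ->
  RIq f q = (RIq f (q1 q) + RIq f (q2 q) + RIq f (q3 q) + RIq f (q4 q))%C.
Proof.
  intros [H1 H2] H. destruct q as [a b c d]. unfold RIq, q1, q2, q3, q4, inq in *; simpl in *.
  assert (Hr : rcont f a b c d) by (intros t s Ht Hs; apply H; simpl; auto).
  rewrite (rI_vsplit f a ((a+b)/2) b c d) by (auto; lra).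
  rewrite (rI_hsplit f a ((a+b)/2) c ((c+d)/2) d) by (try lra; intros t s Ht Hs; apply Hr; lra).
  rewrite (rI_hsplit f ((a+b)/2) b c ((c+d)/2) d) by (try lra; intros t s Ht Hs; apply Hr; lra).
  ring.
Qed.

Lemma child_geom q r : (r = q1 q \/ r = q2 q \/ r = q3 q \/ r = q4 q) -> qok q ->
  ra q <= ra r /\ rb r <= rb q /\ rc q <= rc r /\ rd r <= rd q /\
  rb r - ra r = (rb q - ra q) / 2 /\ rd r - rc r = (rd q - rc q) / 2.
Proof. intros [E|[E|[E|E]]] [H1 H2]; subst r; simpl; repeat split; lra. Qed.

Fixpoint qseq f q0 n := match n with O => q0 | S n => pick f (qseq f q0 n) end.

Lemma qseq_geom f q0 n : qok q0 ->
  ra q0 <= ra (qseq f q0 n) /\ rb (qseq f q0 n) <= rb q0 /\ rc q0 <= rc (qseq f q0 n) /\ rd (qseq f q0 n) <= rd q0 /\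
  rb (qseq f q0 n) - ra (qseq f q0 n) = (rb q0 - ra q0) * (/2)^n /\
  rd (qseq f q0 n) - rc (qseq f q0 n) = (rd q0 - rc q0) * (/2)^n.
Proof.
  intros Hq. induction n as [|n IH]; simpl. lra.
  destruct IH as (A1&A2&A3&A4&A5&A6).
  assert (Hok : qok (qseq f q0 n)).
  { destruct Hq. assert (0 <= (/2)^n) by (apply pow_le; lra).
    split; apply Rminus_le_0; [rewrite A5|rewrite A6]; apply Rmult_le_pos; lra. }
  destruct (child_geom _ _ (pick_in f (qseq f q0 n)) Hok) as (B1&B2&B3&B4&B5&B6).
  repeat split; try lra.
Qed.

Lemma qseq_ok f q0 n : qok q0 -> qok (qseq f q0 n).
Proof. intros Hq. destruct (qseq_geom f q0 n Hq) as (A1&A2&A3&A4&A5&A6). destruct Hq.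
  assert (0 <= (/2)^n) by (apply pow_le; lra).
  split; apply Rminus_le_0; [rewrite A5|rewrite A6]; apply Rmult_le_pos; lra. Qed.

Lemma qseq_step f q0 n : qok q0 -> ra (qseq f q0 n) <= ra (qseq f q0 (S n)) /\ rb (qseq f q0 (S n)) <= rb (qseq f q0 n)
  /\ rc (qseq f q0 n) <= rc (qseq f q0 (S n)) /\ rd (qseq f q0 (S n)) <= rd (qseq f q0 n).
Proof. intros Hq. simpl. pose proof (child_geom _ _ (pick_in f (qseq f q0 n)) (qseq_ok f q0 n Hq)). lra. Qed.

Lemma qseq_mono f q0 m k : qok q0 -> (m <= k)%nat -> ra (qseq f q0 m) <= ra (qseq f q0 k) /\ rb (qseq f q0 k) <= rb (qseq f q0 m)
  /\ rc (qseq f q0 m) <= rc (qseq f q0 k) /\ rd (qseq f q0 k) <= rd (qseq f q0 m).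
Proof. intros Hq H. induction H. lra. pose proof (qseq_step f q0 m0 Hq). lra. Qed.

Lemma qseq_cross f q0 m n : qok q0 -> ra (qseq f q0 m) <= rb (qseq f q0 n) /\ rc (qseq f q0 m) <= rd (qseq f q0 n).
Proof.
  intros Hq. pose proof (qseq_mono f q0 m (max m n) Hq ltac:(lia)).
  pose proof (qseq_mono f q0 n (max m n) Hq ltac:(lia)).
  pose proof (qseq_ok f q0 (max m n) Hq) as [? ?]. lra.
Qed.

Lemma qseq_in f q0 n w : qok q0 -> inq (qseq f q0 n) w -> inq q0 w.
Proof. intros Hq [H1 H2]. pose proof (qseq_geom f q0 n Hq). split; lra. Qed.

Lemma qseq_ratio f q0 n : qok q0 -> (forall w, inq q0 w -> Ccont f w) ->
  Cmod (RIq f q0) <= 4 ^ n * Cmod (RIq f (qseq f q0 n)).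
Proof.
  intros Hq Hc. induction n as [|n IH]. simpl. lra.
  simpl qseq. simpl pow.
  assert (Hok := qseq_ok f q0 n Hq).
  rewrite (quad f (qseq f q0 n)) in IH; auto.
  2:{ intros w Hw. apply Hc. eapply qseq_in; eauto. }
  pose proof (pick_ge f (qseq f q0 n)).
  assert (Cmod (RIq f (q1 (qseq f q0 n)) + RIq f (q2 (qseq f q0 n)) + RIq f (q3 (qseq f q0 n)) +
      RIq f (q4 (qseq f q0 n))) <= Cmod (RIq f (q1 (qseq f q0 n))) + Cmod (RIq f (q2 (qseq f q0 n))) + Cmod (RIq f (q3 (qseq f q0 n))) + Cmod (RIq f (q4 (qseq f q0 n)))).
  { eapply Rle_trans. apply Cmod_triangle. eapply Rle_trans. apply Rplus_le_compat_r. apply Cmod_triangle.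
    pose proof (Cmod_triangle (RIq f (q1 (qseq f q0 n))) (RIq f (q2 (qseq f q0 n)))). lra. }
  pose proof (pow_lt 4 n ltac:(lra)). nra.
Qed.

Lemma Cmod_le_sum (w p : C) : Cmod (w - p) <= Rabs (fst w - fst p) + Rabs (snd w - snd p).
Proof. destruct w, p. apply Cmod_sub_pair. Qed.

Lemma sup_point (u v : nat -> R) : (forall m n, u m <= v n) ->
  { x | (forall n, u n <= x) /\ (forall n, x <= v n) }.
Proof.
  intros H. destruct (completeness (fun x => exists n, x = u n)) as [m [Hm1 Hm2]].
  - exists (v O). intros x [n ->]. apply H.
  - exists (u O). exists O. auto.
  - exists m. split. intros n. apply Hm1. exists n; auto.
    intros n. apply Hm2. intros x [k ->]. apply H.
Qed.

Lemma small_pow (y : R) : 0 < y -> exists N : nat, (/2)^N < y.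
Proof.
  intros Hy. destruct (pow_lt_1_zero (/2) ltac:(rewrite Rabs_right; lra) y Hy) as [N HN].
  exists N. specialize (HN N (le_n N)). rewrite Rabs_right in HN; auto. apply Rle_ge, pow_le. lra.
Qed.

Lemma Cdiff_minus_affine f w al be : Cdiff f w -> Cdiff (fun v => f v - (al + v * be))%C w.
Proof. intros [l Hl]. eexists. apply Cd_minus. exact Hl. apply Cd_plus. apply Cd_const. apply Cd_mult. apply Cd_id. apply Cd_const. Qed.

Theorem goursat f a b c d : a <= b -> c <= d ->
  (forall w, a <= fst w <= b -> c <= snd w <= d -> Cdiff f w) -> rI f a b c d = 0%C.
Proof.
  intros Hab Hcd Hd.
  set (q0 := mkR a b c d).
  assert (Hq : qok q0) by (split; simpl; auto).
  assert (Hc : forall w, inq q0 w -> Ccont f w) by (intros w [H1 H2]; apply Cdiff_cont, Hd; auto).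
  destruct (sup_point (fun n => ra (qseq f q0 n)) (fun n => rb (qseq f q0 n))) as [px [Hpx1 Hpx2]].
  { intros m n. apply (qseq_cross f q0 m n Hq). }
  destruct (sup_point (fun n => rc (qseq f q0 n)) (fun n => rd (qseq f q0 n))) as [py [Hpy1 Hpy2]].
  { intros m n. apply (qseq_cross f q0 m n Hq). }
  set (p := (px, py)).
  assert (Hp : Cdiff f p). { apply Hd; simpl; specialize (Hpx1 O); specialize (Hpx2 O); specialize (Hpy1 O); specialize (Hpy2 O); simpl in *; lra. }
  destruct Hp as [l Hl].
  set (W := b - a). set (H := d - c).
  assert (Hbound : forall eps, 0 < eps -> Cmod (rI f a b c d) <= 2 * eps * (W + H) * (W + H)).
  { intros eps Heps. destruct (Hl eps Heps) as [del [Hdel Hdl]].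
    destruct (small_pow (del / (W + H + 1))) as [N HN].
    { apply Rdiv_lt_0_compat; unfold W, H; lra. }
    set (q := qseq f q0 N).
    destruct (qseq_geom f q0 N Hq) as (A1&A2&A3&A4&A5&A6). fold q in A1, A2, A3, A4, A5, A6.
    simpl in A1, A2, A3, A4, A5, A6. fold W in A5. fold H in A6.
    assert (HX : 0 <= (/2)^N) by (apply pow_le; lra).
    assert (Hsmall : (W + H) * (/2)^N < del).
    { apply (Rmult_lt_compat_l (W + H + 1)) in HN; [|unfold W, H; lra].
      replace ((W + H + 1) * (del / (W + H + 1))) with del in HN by (field; unfold W, H; lra).
      unfold W, H in *. nra. }
    set (g := (fun v => f v - (f p - p * l + v * l))%C).
    assert (Hpq : ra q <= px <= rb q /\ rc q <= py <= rd q).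
    { unfold q. specialize (Hpx1 N); specialize (Hpx2 N); specialize (Hpy1 N); specialize (Hpy2 N). simpl in *. lra. }
    assert (Hgb : forall w, inq q w -> Cmod (g w) <= eps * ((W + H) * (/2)^N)).
    { intros w [Hw1 Hw2].
      assert (Hwp : Cmod (w - p) <= (W + H) * (/2)^N).
      { eapply Rle_trans. apply Cmod_le_sum. simpl.
        assert (Rabs (fst w - px) <= rb q - ra q) by (apply Rabs_le; lra).
        assert (Rabs (snd w - py) <= rd q - rc q) by (apply Rabs_le; lra). lra. }
      unfold g. replace (f w - (f p - p * l + w * l))%C with (f w - f p - (w - p) * l)%C by ring.
      eapply Rle_trans. apply Hdl. lra. apply Rmult_le_compat_l; lra. }
    assert (Hqin : forall w, inq q w -> inq q0 w) by (intros; eapply qseq_in; eauto).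
    assert (Hqok : qok q) by (apply qseq_ok; auto).
    destruct Hqok as [Hq1 Hq2].
    assert (Hgc : bcont g (ra q) (rb q) (rc q) (rd q)).
    { apply rcont_bcont; auto. intros t s Ht Hs. apply Cdiff_cont. apply Cdiff_minus_affine.
      destruct (Hqin (t, s)) as [B1 B2]. split; simpl; lra. apply Hd; simpl in *; lra. }
    assert (Hfc : bcont f (ra q) (rb q) (rc q) (rd q)).
    { apply rcont_bcont; auto. intros t s Ht Hs. apply Hc. apply Hqin. split; simpl; lra. }
    assert (Eg : RIq g q = RIq f q).
    { unfold RIq, g. rewrite rI_minus; auto.
      rewrite rI_affine; auto. ring.
      split; intros; split; apply Ccont_affine. }
    assert (Hgq : Cmod (RIq g q) <= 2 * ((rb q - ra q) + (rd q - rc q)) * (eps * ((W + H) * (/2)^N))).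
    { apply rI_bound; auto; [intros t Ht | intros s Hs]; split; apply Hgb; split; simpl; lra. }
    rewrite Eg, A5, A6 in Hgq.
    pose proof (qseq_ratio f q0 N Hq Hc) as Hr. fold q in Hr.
    unfold RIq in Hr at 1. simpl in Hr.
    assert (E4 : 4 ^ N * ((/2)^N * (/2)^N) = 1).
    { rewrite <- Rpow_mult_distr, <- Rpow_mult_distr. replace (4 * (/2 * /2)) with 1 by field. apply pow1. }
    assert (0 <= 4 ^ N) by (apply pow_le; lra).
    eapply Rle_trans. exact Hr.
    apply Rle_trans with (4 ^ N * (2 * (W * (/ 2) ^ N + H * (/ 2) ^ N) * (eps * ((W + H) * (/ 2) ^ N)))).
    apply Rmult_le_compat_l; auto.
    right. replace (4 ^ N * (2 * (W * (/ 2) ^ N + H * (/ 2) ^ N) * (eps * ((W + H) * (/ 2) ^ N))))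
      with ((4 ^ N * ((/2)^N * (/2)^N)) * (2 * eps * (W + H) * (W + H))) by ring.
    rewrite E4. ring. }
  destruct (Req_dec (Cmod (rI f a b c d)) 0) as [E|E].
  - apply Cmod_eq_0; auto.
  - exfalso. pose proof (Cmod_ge_0 (rI f a b c d)).
    set (m := Cmod (rI f a b c d)) in *.
    assert (HK : 0 < 2 * (W + H) * (W + H) + 1) by (unfold W, H; nra).
    specialize (Hbound (m / (2 * (2 * (W + H) * (W + H) + 1))) ltac:(apply Rdiv_lt_0_compat; lra)).
    assert (m * (2 * (W + H) * (W + H)) / (2 * (2 * (W + H) * (W + H) + 1)) < m).
    { apply Rmult_lt_reg_r with (2 * (2 * (W + H) * (W + H) + 1)). lra.
      unfold Rdiv. rewrite Rmult_assoc, Rinv_l by lra. nra. }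
    assert (2 * (m / (2 * (2 * (W + H) * (W + H) + 1))) * (W + H) * (W + H) = m * (2 * (W + H) * (W + H)) / (2 * (2 * (W + H) * (W + H) + 1))) by (field; lra).
    lra.
Qed.

Lemma rI_vsplit' f a m b c d : a <= m -> m <= b -> c <= d ->
  (forall t, a <= t <= b -> Ccont f (t, c) /\ Ccont f (t, d)) ->
  rI f a b c d = (rI f a m c d + rI f m b c d)%C.
Proof.
  intros H1 H2 H3 H. unfold rI, hI, vI.
  rewrite (CI_chasles (fun t => f (t, c)) a m b), (CI_chasles (fun t => f (t, d)) a m b).
  ring.
  all: apply (cex_h f); auto; intros; apply H; lra.
Qed.

Lemma rI_hsplit' f a b c n d : c <= n -> n <= d -> a <= b ->
  (forall s, c <= s <= d -> Ccont f (a, s) /\ Ccont f (b, s)) ->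
  rI f a b c d = (rI f a b c n + rI f a b n d)%C.
Proof.
  intros H1 H2 H3 H. unfold rI, hI, vI.
  rewrite (CI_chasles (fun t => f (b, t)) c n d), (CI_chasles (fun t => f (a, t)) c n d).
  ring.
  all: apply (cex_v f); auto; intros; apply H; lra.
Qed.

Lemma deform f a a1 b1 b c c1 d1 d : a <= a1 -> a1 <= b1 -> b1 <= b -> c <= c1 -> c1 <= d1 -> d1 <= d ->
  (forall w, a <= fst w <= b -> c <= snd w <= d -> ~ (a1 < fst w < b1 /\ c1 < snd w < d1) -> Cdiff f w) ->
  rI f a b c d = rI f a1 b1 c1 d1.
Proof.
  intros Ha1 Hab1 Hb1 Hc1 Hcd1 Hd1 H.
  assert (Hc : forall w, a <= fst w <= b -> c <= snd w <= d -> ~ (a1 < fst w < b1 /\ c1 < snd w < d1) -> Ccont f w)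
    by (intros; apply Cdiff_cont; auto).
  rewrite (rI_vsplit' f a a1 b c d) by (try lra; intros t Ht; split; apply Hc; simpl; lra).
  rewrite (rI_vsplit' f a1 b1 b c d) by (try lra; intros t Ht; split; apply Hc; simpl; lra).
  rewrite (rI_hsplit' f a1 b1 c c1 d) by (try lra; intros t Ht; split; apply Hc; simpl; lra).
  rewrite (rI_hsplit' f a1 b1 c1 d1 d) by (try lra; intros t Ht; split; apply Hc; simpl; lra).
  rewrite (goursat f a a1 c d), (goursat f b1 b c d), (goursat f a1 b1 c c1), (goursat f a1 b1 d1 d);
    try lra; try (intros w Hw1 Hw2; apply H; lra).
  ring.
Qed.

Lemma zero_of_small (x K e0 : R) : 0 < e0 -> (forall eps, 0 < eps < e0 -> x <= eps * K) -> x <= 0.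
Proof.
  intros He H. destruct (Rle_dec x 0) as [h|h]; auto. exfalso.
  set (eps := Rmin (e0 / 2) (x / (2 * (Rabs K + 1)))).
  assert (Hr : 0 < Rabs K + 1) by (pose proof (Rabs_pos K); lra).
  assert (He1 : 0 < eps) by (apply Rmin_pos; [lra| apply Rdiv_lt_0_compat; lra]).
  assert (He2 : eps <= x / (2 * (Rabs K + 1))) by apply Rmin_r.
  assert (He3 : eps <= e0 / 2) by apply Rmin_l.
  specialize (H eps ltac:(lra)).
  assert (eps * K <= eps * (Rabs K + 1)) by (apply Rmult_le_compat_l; [lra|]; pose proof (Rle_abs K); lra).
  assert (eps * (Rabs K + 1) <= x / 2).
  { apply Rmult_le_compat_r with (r := Rabs K + 1) in He2; [|lra].
    replace (x / (2 * (Rabs K + 1)) * (Rabs K + 1)) with (x / 2) in He2 by (field; lra). lra. }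
  lra.
Qed.

Lemma rI_removable f a b c d z B r0 : a < fst z < b -> c < snd z < d -> 0 < r0 ->
  (forall w, a <= fst w <= b -> c <= snd w <= d -> w <> z -> Cdiff f w) ->
  (forall w, Cmod (w - z) < r0 -> Cmod (f w) <= B) ->
  rI f a b c d = 0%C.
Proof.
  intros Hz1 Hz2 Hr0 Hd Hb.
  apply Cmod_eq_0. apply Rle_antisym; [|apply Cmod_ge_0].
  destruct z as [zx zy]; simpl in *.
  set (e0 := Rmin (Rmin (zx - a) (b - zx)) (Rmin (Rmin (zy - c) (d - zy)) (r0 / 4))).
  assert (He0 : 0 < e0) by (unfold e0; repeat apply Rmin_pos; lra).
  apply (zero_of_small _ (8 * B) e0 He0). intros eps [Heps1 Heps2].
  assert (E1 : e0 <= zx - a) by (unfold e0; eapply Rle_trans; [apply Rmin_l|]; apply Rmin_l).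
  assert (E2 : e0 <= b - zx) by (unfold e0; eapply Rle_trans; [apply Rmin_l|]; apply Rmin_r).
  assert (E3 : e0 <= zy - c) by (unfold e0; eapply Rle_trans; [apply Rmin_r|]; eapply Rle_trans; [apply Rmin_l|]; apply Rmin_l).
  assert (E4 : e0 <= d - zy) by (unfold e0; eapply Rle_trans; [apply Rmin_r|]; eapply Rle_trans; [apply Rmin_l|]; apply Rmin_r).
  assert (E5 : e0 <= r0 / 4) by (unfold e0; eapply Rle_trans; [apply Rmin_r|]; apply Rmin_r).
  rewrite (deform f a (zx - eps) (zx + eps) b c (zy - eps) (zy + eps) d); try lra.
  2:{ intros w Hw1 Hw2 Hn. apply Hd; auto. intro E. subst w. simpl in Hn. lra. }
  assert (Hc : forall w, zx - eps <= fst w <= zx + eps -> zy - eps <= snd w <= zy + eps ->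
     ~ (zx - eps < fst w < zx + eps /\ zy - eps < snd w < zy + eps) -> Ccont f w /\ Cmod (f w) <= B).
  { intros w Hw1 Hw2 Hn. split.
    - apply Cdiff_cont. apply Hd; try lra. intro E. subst w. simpl in Hn. lra.
    - apply Hb. eapply Rle_lt_trans. apply Cmod_le_sum. simpl.
      assert (Rabs (fst w - zx) <= eps) by (apply Rabs_le; lra).
      assert (Rabs (snd w - zy) <= eps) by (apply Rabs_le; lra). lra. }
  eapply Rle_trans.
  apply (rI_bound f _ _ _ _ B); try lra.
  - split; intros; split; apply Hc; simpl; lra.
  - intros; split; apply Hc; simpl; lra.
  - intros; split; apply Hc; simpl; lra.
  - right. ring.
Qed.

Lemma snd_rI_form (X Y U V : C) : snd (X - Y + Ci * (U - V))%C = snd X - snd Y + (fst U - fst V).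
Proof. destruct X, Y, U, V. simpl. ring. Qed.

Lemma CI_snd g a b : cex g a b -> snd (CI g a b) = RInt (fun t => snd (g t)) a b.
Proof. intros H. symmetry. apply is_RInt_unique. apply cis_snd. apply CI_correct. auto. Qed.
Lemma CI_fst g a b : cex g a b -> fst (CI g a b) = RInt (fun t => fst (g t)) a b.
Proof. intros H. symmetry. apply is_RInt_unique. apply cis_fst. apply CI_correct. auto. Qed.

Lemma cont_path_R (pr : C -> R) (f : C -> C) (p : R -> C) (t : R) :
  (forall u v, Rabs (pr u - pr v) <= Cmod (u - v)) ->
  (forall eps, 0 < eps -> exists d, 0 < d /\ forall s, Rabs (s - t) < d -> Cmod (p s - p t) < eps) ->
  Ccont f (p t) -> continuous (fun s => pr (f (p s))) t.
Proof.
  intros Hpr Hp Hf. apply (proj2 (filterlim_locally _ _)).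
  intros [eps Heps]. destruct (Hf eps Heps) as [d [Hd H]].
  destruct (Hp d Hd) as [d2 [Hd2 H2]].
  exists (mkposreal d2 Hd2). intros s Hs. simpl in Hs.
  unfold ball in Hs; simpl in Hs; unfold AbsRing_ball, abs, minus, plus, opp in Hs; simpl in Hs.
  specialize (H _ (H2 s Hs)).
  unfold ball; simpl; unfold AbsRing_ball, abs, minus, plus, opp; simpl.
  eapply Rle_lt_trans; [|exact H]. apply Hpr.
Qed.

Lemma pr_fst u v : Rabs (fst u - fst v) <= Cmod (u - v).
Proof. apply (Rabs_fst_le (u - v)%C). Qed.
Lemma pr_snd u v : Rabs (snd u - snd v) <= Cmod (u - v).
Proof. apply (Rabs_snd_le (u - v)%C). Qed.
Lemma pr_nfst u v : Rabs (- fst u - - fst v) <= Cmod (u - v).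
Proof. replace (- fst u - - fst v) with (- (fst u - fst v)) by ring. rewrite Rabs_Ropp. apply pr_fst. Qed.
Lemma pr_nsnd u v : Rabs (- snd u - - snd v) <= Cmod (u - v).
Proof. replace (- snd u - - snd v) with (- (snd u - snd v)) by ring. rewrite Rabs_Ropp. apply pr_snd. Qed.

Lemma Cdiff_kernel z w : w <> z -> Cdiff (fun v => / (v - z))%C w.
Proof. intros H. eexists. apply Cd_inv. apply Cd_minus. apply Cd_id. apply Cd_const.
  intro E. apply H. apply (f_equal (fun x => x + z)%C) in E. rewrite <- (Cplus_0_l z). rewrite <- E. ring. Qed.

Lemma kernel_nonzero a b c d z : a < fst z < b -> c < snd z < d ->
  rI (fun w => / (w - z))%C a b c d <> 0%C.
Proof.
  intros Hx Hy E. set (f := (fun w => / (w - z))%C) in E.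
  assert (Hcf : forall w, w <> z -> Ccont f w) by (intros; apply Cdiff_cont, Cdiff_kernel; auto).
  assert (Hs : 0 < snd (rI f a b c d)).
  { unfold rI, hI, vI. rewrite snd_rI_form.
    rewrite CI_snd, CI_snd, CI_fst, CI_fst.
    2: apply (cex_v f); [lra|]; intros t Ht; apply Hcf; intro Ez; rewrite <- Ez in Hx, Hy; simpl in Hx, Hy; lra.
    2: apply (cex_v f); [lra|]; intros t Ht; apply Hcf; intro Ez; rewrite <- Ez in Hx, Hy; simpl in Hx, Hy; lra.
    2: apply (cex_h f); [lra|]; intros t Ht; apply Hcf; intro Ez; rewrite <- Ez in Hx, Hy; simpl in Hx, Hy; lra.
    2: apply (cex_h f); [lra|]; intros t Ht; apply Hcf; intro Ez; rewrite <- Ez in Hx, Hy; simpl in Hx, Hy; lra.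
    destruct z as [zx zy]; simpl in Hx, Hy.
    assert (I1 : 0 < RInt (fun t => snd (f (t, c))) a b).
    { apply RInt_gt_0; try lra.
      - intros t Ht. unfold f. replace ((t, c) - (zx, zy))%C with ((t - zx)%R, (c - zy)%R) by cring.
        change (0 < - (c - zy) / ((t - zx) ^ 2 + (c - zy) ^ 2)).
        apply Rdiv_lt_0_compat. lra. assert (0 < (c - zy)^2) by (rewrite <- Rsqr_pow2; apply Rsqr_pos_lt; lra). assert (0 <= (t - zx)^2) by (apply pow2_ge_0). lra.
      - intros t Ht. apply (cont_path_R snd f (fun s => (s, c))). apply pr_snd. apply hpath_cont.
        apply Hcf. intro Ez. injection Ez. lra. }
    assert (I2 : 0 < RInt (fun t => - snd (f (t, d))) a b).
    { apply RInt_gt_0; try lra.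
      - intros t Ht. unfold f. replace ((t, d) - (zx, zy))%C with ((t - zx)%R, (d - zy)%R) by cring.
        change (0 < - (- (d - zy) / ((t - zx) ^ 2 + (d - zy) ^ 2))).
        assert (0 < (d - zy)^2) by (rewrite <- Rsqr_pow2; apply Rsqr_pos_lt; lra). assert (0 <= (t - zx)^2) by (apply pow2_ge_0).
        replace (- (- (d - zy) / ((t - zx) ^ 2 + (d - zy) ^ 2))) with ((d - zy) / ((t - zx) ^ 2 + (d - zy) ^ 2)) by (field; lra).
        apply Rdiv_lt_0_compat; lra.
      - intros t Ht. apply (cont_path_R (fun u => - snd u) f (fun s => (s, d))). apply pr_nsnd. apply hpath_cont.
        apply Hcf. intro Ez. injection Ez. lra. }
    assert (I3 : 0 < RInt (fun t => fst (f (b, t))) c d).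
    { apply RInt_gt_0; try lra.
      - intros t Ht. unfold f. replace ((b, t) - (zx, zy))%C with ((b - zx)%R, (t - zy)%R) by cring.
        change (0 < (b - zx) / ((b - zx) ^ 2 + (t - zy) ^ 2)).
        assert (0 < (b - zx)^2) by (rewrite <- Rsqr_pow2; apply Rsqr_pos_lt; lra). assert (0 <= (t - zy)^2) by (apply pow2_ge_0).
        apply Rdiv_lt_0_compat; lra.
      - intros t Ht. apply (cont_path_R fst f (fun s => (b, s))). apply pr_fst. apply vpath_cont.
        apply Hcf. intro Ez. injection Ez. lra. }
    assert (I4 : 0 < RInt (fun t => - fst (f (a, t))) c d).
    { apply RInt_gt_0; try lra.
      - intros t Ht. unfold f. replace ((a, t) - (zx, zy))%C with ((a - zx)%R, (t - zy)%R) by cring.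
        change (0 < - ((a - zx) / ((a - zx) ^ 2 + (t - zy) ^ 2))).
        assert (0 < (a - zx)^2) by (rewrite <- Rsqr_pow2; apply Rsqr_pos_lt; lra). assert (0 <= (t - zy)^2) by (apply pow2_ge_0).
        replace (- ((a - zx) / ((a - zx) ^ 2 + (t - zy) ^ 2))) with ((zx - a) / ((a - zx) ^ 2 + (t - zy) ^ 2)) by (field; lra).
        apply Rdiv_lt_0_compat; lra.
      - intros t Ht. apply (cont_path_R (fun u => - fst u) f (fun s => (a, s))). apply pr_nfst. apply vpath_cont.
        apply Hcf. intro Ez. injection Ez. lra. }
    assert (E2 : RInt (fun t => - snd (f (t, d))) a b = - RInt (fun t => snd (f (t, d))) a b).
    { apply (@RInt_opp R_CompleteNormedModule (fun t => snd (f (t, d))) a b).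
      apply (@ex_RInt_continuous R_CompleteNormedModule). intros t Ht. rewrite Rmin_left, Rmax_right in Ht by lra.
      apply (cont_path_R snd f (fun s => (s, d))). apply pr_snd. apply hpath_cont.
      apply Hcf. intro Ez. injection Ez. lra. }
    assert (E4 : RInt (fun t => - fst (f (a, t))) c d = - RInt (fun t => fst (f (a, t))) c d).
    { apply (@RInt_opp R_CompleteNormedModule (fun t => fst (f (a, t))) c d).
      apply (@ex_RInt_continuous R_CompleteNormedModule). intros t Ht. rewrite Rmin_left, Rmax_right in Ht by lra.
      apply (cont_path_R fst f (fun s => (a, s))). apply pr_fst. apply vpath_cont.
      apply Hcf. intro Ez. injection Ez. lra. }
    lra. }
  rewrite E in Hs. simpl in Hs. lra.
Qed.

Lemma Cdiff_plus f g w : Cdiff f w -> Cdiff g w -> Cdiff (fun v => f v + g v)%C w.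
Proof. intros [a Ha] [b Hb]. eexists. apply Cd_plus; eauto. Qed.
Lemma Cdiff_minus f g w : Cdiff f w -> Cdiff g w -> Cdiff (fun v => f v - g v)%C w.
Proof. intros [a Ha] [b Hb]. eexists. apply Cd_minus; eauto. Qed.
Lemma Cdiff_mult f g w : Cdiff f w -> Cdiff g w -> Cdiff (fun v => f v * g v)%C w.
Proof. intros [a Ha] [b Hb]. eexists. apply Cd_mult; eauto. Qed.
Lemma Cdiff_inv g w : Cdiff g w -> g w <> 0%C -> Cdiff (fun v => / g v)%C w.
Proof. intros [b Hb] H. eexists. apply Cd_inv; eauto. Qed.
Lemma Cdiff_const k w : Cdiff (fun _ => k) w.
Proof. eexists. apply Cd_const. Qed.
Lemma Cdiff_id w : Cdiff (fun v => v) w.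
Proof. eexists. apply Cd_id. Qed.
Lemma Cdiff_ext_loc f g w d : 0 < d -> (forall v, Cmod (v - w) < d -> f v = g v) -> Cdiff f w -> Cdiff g w.
Proof. intros Hd He [a Ha]. exists a. eapply Cd_ext_loc; eauto. Qed.

Fixpoint pw (x : C) (n : nat) : C := match n with O => 1%C | S n => (x * pw x n)%C end.

Lemma pw_Cmod (x : C) n : Cmod (pw x n) = Cmod x ^ n.
Proof. induction n; simpl. rewrite Cmod_1; auto. rewrite Cmod_mult, IHn. auto. Qed.
Lemma pw_neq0 (x : C) n : x <> 0%C -> pw x n <> 0%C.
Proof. intros H. induction n. exact C1_nz. change (x * pw x n <> 0)%C. apply Cmult_neq_0; auto. Qed.
Lemma Cdiff_pw c n w : Cdiff (fun v => pw (v - c) n) w.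
Proof. induction n; simpl. apply Cdiff_const. apply (Cdiff_mult (fun v => v - c)%C (fun v => pw (v - c) n)); auto.
  apply Cdiff_minus. apply Cdiff_id. apply Cdiff_const. Qed.

Lemma sub_neq0 (u v : C) : u <> v -> (u - v)%C <> 0%C.
Proof. intros H E. apply H. apply (f_equal (fun x => x + v)%C) in E. rewrite <- (Cplus_0_l v). rewrite <- E. ring. Qed.

Definition Ceq_dec (u v : C) : {u = v} + {u <> v}.
Proof. destruct u as [a b], v as [c d]. destruct (Req_EM_T a c), (Req_EM_T b d); subst; auto;
  right; intro E; injection E; auto. Defined.

Lemma side_bound G (p : R -> C) a b :
  a <= b ->
  (forall t, forall eps, 0 < eps -> exists d, 0 < d /\ forall s, Rabs (s - t) < d -> Cmod (p s - p t) < eps) ->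
  (forall t, a <= t <= b -> Ccont G (p t)) -> exists M, forall t, a <= t <= b -> Cmod (G (p t)) <= M.
Proof.
  intros Hab Hp Hc.
  destruct (continuity_ab_maj (fun t => Cmod (G (p t))) a b Hab) as [x [Hx _]].
  - intros t Ht. apply continuity_pt_filterlim.
    apply (cont_path_R Cmod G p t). intros u v. apply Rabs_le. pose proof (Cmod_rev_tri u v). pose proof (Cmod_rev_tri v u).
    rewrite Cmod_sub_sym in H0. lra. apply Hp. apply Hc; auto.
  - exists (Cmod (G (p x))). auto.
Qed.

Lemma Cmod_sup_ge (w c : C) r : r <= Rabs (fst w - fst c) \/ r <= Rabs (snd w - snd c) -> r <= Cmod (w - c).
Proof. intros [H|H]. eapply Rle_trans; [exact H|apply pr_fst]. eapply Rle_trans; [exact H|apply pr_snd]. Qed.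

Definition onB a b c d (w : C) := (a <= fst w <= b /\ (snd w = c \/ snd w = d)) \/ (c <= snd w <= d /\ (fst w = a \/ fst w = b)).

Lemma onB_far cx cy r w : 0 < r -> onB (cx - r) (cx + r) (cy - r) (cy + r) w -> r <= Cmod (w - (cx, cy)).
Proof. intros Hr Hw. apply Cmod_sup_ge. simpl.
  destruct Hw as [[_ [E|E]]|[_ [E|E]]]; rewrite E; [right|right|left|left].
  all: replace (cy - r - cy) with (- r) by ring; replace (cy + r - cy) with r by ring;
       replace (cx - r - cx) with (- r) by ring; replace (cx + r - cx) with r by ring.
  all: rewrite ?Rabs_Ropp, Rabs_right; lra.
Qed.

Lemma onB_in a b c d w : a <= b -> c <= d -> onB a b c d w -> a <= fst w <= b /\ c <= snd w <= d.
Proof. intros. destruct H1 as [[? [E|E]]|[? [E|E]]]; rewrite E; lra. Qed.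

Lemma z_in cx cy r z : Cmod (z - (cx, cy)) < r / 2 -> cx - r / 2 < fst z < cx + r / 2 /\ cy - r / 2 < snd z < cy + r / 2.
Proof. intros H. pose proof (pr_fst z (cx, cy)). pose proof (pr_snd z (cx, cy)). simpl in *.
  assert (Rabs (fst z - cx) < r / 2) by lra. assert (Rabs (snd z - cy) < r / 2) by lra.
  apply Rabs_def2 in H2. apply Rabs_def2 in H3. lra. Qed.

Lemma rI_ext_onB f g a b c d : a <= b -> c <= d -> (forall w, onB a b c d w -> f w = g w) -> rI f a b c d = rI g a b c d.
Proof. intros Hab Hcd H. apply rI_ext; auto; intros; split; apply H; unfold onB; simpl; auto. Qed.
Lemma bcont_onB f a b c d : (forall w, onB a b c d w -> Ccont f w) -> bcont f a b c d.
Proof. intros H. split; intros; split; apply H; unfold onB; simpl; auto. Qed.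
Lemma rI_bound_onB f a b c d M : a <= b -> c <= d -> (forall w, onB a b c d w -> Ccont f w /\ Cmod (f w) <= M) ->
  Cmod (rI f a b c d) <= 2 * ((b - a) + (d - c)) * M.
Proof. intros Hab Hcd H. apply rI_bound; auto. apply bcont_onB; intros; apply H; auto.
  all: intros; split; apply H; unfold onB; simpl; auto. Qed.

Lemma onB_neq a b c d z w : a < fst z < b -> c < snd z < d -> onB a b c d w -> w <> z.
Proof. intros H1 H2 Hw E. subst w. destruct Hw as [[? [E|E]]|[? [E|E]]]; lra. Qed.

Lemma cauchy_step G a b c d z : a < fst z < b -> c < snd z < d ->
  (forall w, a <= fst w <= b -> c <= snd w <= d -> Cdiff G w) ->
  rI (fun w => G w * / (w - z))%C a b c d = (G z * rI (fun w => / (w - z))%C a b c d)%C.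
Proof.
  intros Hzx Hzy HG.
  destruct (HG z ltac:(lra) ltac:(lra)) as [l Hl].
  set (h := fun w => if Ceq_dec w z then l else ((G w - G z) * / (w - z))%C).
  assert (Hhd : forall w, a <= fst w <= b -> c <= snd w <= d -> w <> z -> Cdiff h w).
  { intros w Hw1 Hw2 Hwz.
    apply (Cdiff_ext_loc (fun v => (G v - G z) * / (v - z))%C h w (Cmod (w - z))).
    - apply Cmod_gt_0. apply sub_neq0. auto.
    - intros v Hv. unfold h. destruct (Ceq_dec v z) as [E|E]; auto. subst v. rewrite Cmod_sub_sym in Hv. lra.
    - apply Cdiff_mult. apply Cdiff_minus. apply HG; auto. apply Cdiff_const.
      apply (Cdiff_inv (fun v => v - z)%C). apply Cdiff_minus. apply Cdiff_id. apply Cdiff_const. apply sub_neq0; auto. }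
  assert (Hh0 : rI h a b c d = 0%C).
  { destruct (Hl 1 Rlt_0_1) as [del [Hdel Hd]].
    apply (rI_removable h a b c d z (Cmod l + 1) del); auto.
    intros w Hw. unfold h. destruct (Ceq_dec w z) as [E|E]. lra.
    assert (Hwz : (w - z)%C <> 0%C) by (apply sub_neq0; auto).
    replace ((G w - G z) * / (w - z))%C with (l + (G w - G z - (w - z) * l) * / (w - z))%C by (field; auto).
    eapply Rle_trans. apply Cmod_triangle. apply Rplus_le_compat_l.
    rewrite Cmod_mult, Cmod_inv by auto.
    assert (0 < Cmod (w - z)) by (apply Cmod_gt_0; auto).
    specialize (Hd w Hw).
    apply (Rmult_le_reg_r (Cmod (w - z))); auto. rewrite Rmult_assoc, Rinv_l by lra. lra. }
  assert (Hab : a <= b) by lra. assert (Hcd : c <= d) by lra.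
  rewrite (rI_ext_onB (fun w => G w * / (w - z))%C (fun w => h w + G z * / (w - z))%C); auto.
  2:{ intros w Hw. pose proof (onB_neq a b c d z w Hzx Hzy Hw) as Hn. unfold h.
      destruct (Ceq_dec w z) as [E|E]; [contradiction|]. field. apply sub_neq0; auto. }
  rewrite rI_plus; auto.
  rewrite rI_cmul; auto. rewrite Hh0. ring.
  - apply bcont_onB. intros w Hw. apply Cdiff_cont. apply Cdiff_kernel. eapply onB_neq; eauto.
  - apply bcont_onB. intros w Hw. apply Cdiff_cont. apply Hhd. 1-2: apply onB_in in Hw; tauto. eapply onB_neq; eauto.
  - apply bcont_onB. intros w Hw. apply Cdiff_cont.
    apply (Cdiff_mult (fun _ => G z) (fun v => / (v - z))%C). apply Cdiff_const. apply Cdiff_kernel. eapply onB_neq; eauto.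
Qed.

Fixpoint EN (G : C -> C) (z cc : C) (N : nat) (w : C) : C :=
  match N with O => 0%C | S N => (EN G z cc N w + pw (z - cc) N * G w * / pw (w - cc) (S N))%C end.
Definition RN (G : C -> C) (z cc : C) (N : nat) (w : C) : C :=
  (G w * pw (z - cc) N * / (pw (w - cc) N * (w - z)))%C.

Lemma EN_RN (G : C -> C) (z cc : C) N (w : C) : w <> cc -> w <> z -> (G w * / (w - z))%C = (EN G z cc N w + RN G z cc N w)%C.
Proof.
  intros H1 H2. assert (Hc : (w - cc)%C <> 0%C) by (apply sub_neq0; auto).
  assert (Hz : (w - z)%C <> 0%C) by (apply sub_neq0; auto).
  induction N as [|N IH].
  - unfold RN. simpl. field. auto.
  - rewrite IH. unfold RN. simpl EN. simpl pw.
    assert (HP := pw_neq0 (w - cc) N Hc).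
    generalize dependent (pw (w - cc) N). generalize (pw (z - cc) N). intros Q P HP.
    field. auto.
Qed.

Lemma EN_diff (G : C -> C) (z cc : C) rho N (w : C) : 0 < rho -> (forall v, Cmod (v - cc) < rho -> G v = 0%C) ->
  Cdiff G w \/ Cmod (w - cc) < rho -> Cdiff (EN G z cc N) w.
Proof.
  intros Hrho H0 HG. induction N as [|N IH].
  - apply Cdiff_const.
  - simpl. apply (Cdiff_plus (EN G z cc N) (fun v => pw (z - cc) N * G v * / pw (v - cc) (S N))%C); auto.
    destruct (Rlt_dec (Cmod (w - cc)) rho) as [Hw|Hw].
    + apply (Cdiff_ext_loc (fun _ => 0%C) _ w (rho - Cmod (w - cc))). lra.
      intros v Hv. rewrite H0. ring. pose proof (Cmod_triangle (v - w) (w - cc)).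
      replace (v - w + (w - cc))%C with (v - cc)%C in H by ring. lra.
      apply Cdiff_const.
    + destruct HG as [HG|HG]; [|lra].
      assert (Hn : w <> cc). { intro E. subst w. rewrite Cmod_sub_self in Hw. lra. }
      apply (Cdiff_mult (fun v => pw (z - cc) N * G v)%C (fun v => / pw (v - cc) (S N))%C).
      apply (Cdiff_mult (fun _ => pw (z - cc) N)). apply Cdiff_const. auto.
      apply (Cdiff_inv (fun v => pw (v - cc) (S N))). apply Cdiff_pw. apply pw_neq0. apply sub_neq0; auto.
Qed.

Lemma RN_bound (A Z Wc Wz M r : R) (N : nat) : 0 < r -> 0 <= A <= M -> 0 <= Z <= r / 2 -> r <= Wc -> r / 2 <= Wz ->
  A * Z ^ N * / (Wc ^ N * Wz) <= M * (/ 2) ^ N * (2 / r).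
Proof.
  intros Hr HA HZ HW HWz.
  assert (HrN : 0 < r ^ N) by (apply pow_lt; lra).
  assert (HWN : r ^ N <= Wc ^ N) by (apply pow_incr; lra).
  assert (HZN : Z ^ N <= (r / 2) ^ N) by (apply pow_incr; lra).
  assert (HZ0 : 0 <= Z ^ N) by (apply pow_le; lra).
  apply Rle_trans with (M * (r / 2) ^ N * / (r ^ N * (r / 2))).
  - apply Rmult_le_compat. apply Rmult_le_pos; lra.
    left. apply Rinv_0_lt_compat. apply Rmult_lt_0_compat; lra.
    apply Rmult_le_compat; lra.
    apply Rinv_le_contravar. apply Rmult_lt_0_compat; lra. apply Rmult_le_compat; lra.
  - right. unfold Rdiv. rewrite Rpow_mult_distr. field. split; lra.
Qed.

Lemma local_id G cx cy r rho : 0 < r -> 0 < rho ->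
  (forall w, cx - r <= fst w <= cx + r -> cy - r <= snd w <= cy + r -> Cdiff G w) ->
  (forall w, Cmod (w - (cx, cy)) < rho -> G w = 0%C) ->
  forall z, Cmod (z - (cx, cy)) < r / 2 -> G z = 0%C.
Proof.
  intros Hr Hrho HG H0 z Hz.
  set (a := cx - r). set (b := cx + r). set (c := cy - r). set (d := cy + r). set (cc := (cx, cy)) in *.
  assert (Hab : a <= b) by (unfold a, b; lra). assert (Hcd : c <= d) by (unfold c, d; lra).
  destruct (z_in cx cy r z Hz) as [Hzx Hzy].
  assert (Hzx' : a < fst z < b) by (unfold a, b; lra). assert (Hzy' : c < snd z < d) by (unfold c, d; lra).
  assert (HK := kernel_nonzero a b c d z Hzx' Hzy').
  set (K := rI (fun w => / (w - z))%C a b c d) in *.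
  assert (Hcau := cauchy_step G a b c d z Hzx' Hzy' HG). fold K in Hcau.
  assert (HGc : forall w, a <= fst w <= b -> c <= snd w <= d -> Ccont G w) by (intros; apply Cdiff_cont, HG; auto).
  destruct (side_bound G (fun t => (t, c)) a b Hab (hpath_cont c)) as [M1 HM1]. { intros; apply HGc; simpl; lra. }
  destruct (side_bound G (fun t => (t, d)) a b Hab (hpath_cont d)) as [M2 HM2]. { intros; apply HGc; simpl; lra. }
  destruct (side_bound G (fun t => (a, t)) c d Hcd (vpath_cont a)) as [M3 HM3]. { intros; apply HGc; simpl; lra. }
  destruct (side_bound G (fun t => (b, t)) c d Hcd (vpath_cont b)) as [M4 HM4]. { intros; apply HGc; simpl; lra. }
  set (M := Rmax (Rmax M1 M2) (Rmax M3 M4)).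
  assert (HM : forall w, onB a b c d w -> Cmod (G w) <= M).
  { intros [wx wy] Hw. unfold M. destruct Hw as [[Hw [E|E]]|[Hw [E|E]]]; simpl in *; subst.
    - eapply Rle_trans; [apply HM1; auto|]. eapply Rle_trans; [apply Rmax_l|apply Rmax_l].
    - eapply Rle_trans; [apply HM2; auto|]. eapply Rle_trans; [apply Rmax_r|apply Rmax_l].
    - eapply Rle_trans; [apply HM3; auto|]. eapply Rle_trans; [apply Rmax_l|apply Rmax_r].
    - eapply Rle_trans; [apply HM4; auto|]. eapply Rle_trans; [apply Rmax_r|apply Rmax_r]. }
  assert (HBfar : forall w, onB a b c d w -> r <= Cmod (w - cc)) by (intros; apply onB_far; auto).
  assert (HBz : forall w, onB a b c d w -> r / 2 <= Cmod (w - z)).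
  { intros w Hw. pose proof (HBfar w Hw). pose proof (Cmod_triangle (w - z) (z - cc)).
    replace (w - z + (z - cc))%C with (w - cc)%C in H1 by ring. lra. }
  assert (HBc : forall w, onB a b c d w -> w <> cc).
  { intros w Hw E. pose proof (HBfar w Hw). rewrite E, Cmod_sub_self in H. lra. }
  assert (HBn : forall w, onB a b c d w -> w <> z) by (intros; eapply onB_neq; eauto).
  assert (Hmain : forall N, Cmod (G z * K)%C <= 2 * ((b - a) + (d - c)) * (M * (/ 2) ^ N * (2 / r))).
  { intros N. rewrite <- Hcau.
    rewrite (rI_ext_onB _ (fun w => EN G z cc N w + RN G z cc N w)%C); auto.
    2:{ intros w Hw. apply EN_RN; auto. }
    assert (HEd : forall w, a <= fst w <= b -> c <= snd w <= d -> Cdiff (EN G z cc N) w).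
    { intros w Hw1 Hw2. apply (EN_diff G z cc rho); auto. }
    assert (HRd : forall w, onB a b c d w -> Cdiff (RN G z cc N) w).
    { intros w Hw. unfold RN.
      apply (Cdiff_mult (fun v => G v * pw (z - cc) N)%C (fun v => / (pw (v - cc) N * (v - z)))%C).
      apply (Cdiff_mult G (fun _ => pw (z - cc) N)). apply HG; apply onB_in in Hw; tauto. apply Cdiff_const.
      apply (Cdiff_inv (fun v => pw (v - cc) N * (v - z))%C).
      apply (Cdiff_mult (fun v => pw (v - cc) N) (fun v => v - z)%C). apply Cdiff_pw.
      apply Cdiff_minus. apply Cdiff_id. apply Cdiff_const.
      apply Cmult_neq_0. apply pw_neq0, sub_neq0; auto. apply sub_neq0; auto. }
    rewrite rI_plus; auto.
    2:{ apply bcont_onB. intros w Hw. apply Cdiff_cont. apply HEd; apply onB_in in Hw; tauto. }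
    2:{ apply bcont_onB. intros w Hw. apply Cdiff_cont. auto. }
    rewrite (goursat (EN G z cc N)); auto. rewrite Cplus_0_l.
    apply rI_bound_onB; auto. intros w Hw. split. apply Cdiff_cont; auto.
    unfold RN. rewrite !Cmod_mult, Cmod_inv, Cmod_mult, !pw_Cmod.
    2:{ apply Cmult_neq_0. apply pw_neq0, sub_neq0; auto. apply sub_neq0; auto. }
    apply RN_bound; [lra | split; [apply Cmod_ge_0|apply HM; auto] | split; [apply Cmod_ge_0| lra] | apply HBfar; auto | apply HBz; auto]. }
  assert (HM0 : 0 <= M) by (eapply Rle_trans; [apply Cmod_ge_0| apply (HM (a, c))]; left; simpl; split; [lra| auto]).
  assert (HGK : (G z * K)%C = 0%C).
  { apply Cmod_eq_0. apply Rle_antisym; [|apply Cmod_ge_0].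
    destruct (Rle_dec (Cmod (G z * K)%C) 0) as [h|h]; auto. exfalso.
    set (e := Cmod (G z * K)%C) in *.
    set (L := 2 * ((b - a) + (d - c)) * (M * (2 / r))).
    assert (HL : 0 <= L) by (unfold L; apply Rmult_le_pos; [unfold a, b, c, d; lra| apply Rmult_le_pos; [lra| apply Rlt_le, Rdiv_lt_0_compat; lra]]).
    destruct (small_pow (e / (L + 1))) as [N HN]. apply Rdiv_lt_0_compat; lra.
    specialize (Hmain N).
    assert (E : 2 * ((b - a) + (d - c)) * (M * (/ 2) ^ N * (2 / r)) = L * (/2) ^ N) by (unfold L; ring).
    rewrite E in Hmain.
    assert (0 <= (/2)^N) by (apply pow_le; lra).
    apply (Rmult_lt_compat_l (L + 1)) in HN; [|lra].
    replace ((L + 1) * (e / (L + 1))) with e in HN by (field; lra). nra. }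
  destruct (Ceq_dec (G z) 0%C) as [E|E]; auto. exfalso. apply (Cmult_neq_0 (G z) K); auto.
Qed.

Definition Zset (G : C -> C) (z : C) := exists rho, 0 < rho /\ forall w, Cmod (w - z) < rho -> G w = 0%C.

Lemma propagate G (p q : C) r : 0 < r -> Zset G p ->
  (forall w, Rabs (fst w - fst p) <= r -> Rabs (snd w - snd p) <= r -> Cdiff G w) ->
  Cmod (q - p) < r / 2 -> Zset G q.
Proof.
  intros Hr [rho [Hrho H0]] HG Hq. destruct p as [px py].
  exists (r / 2 - Cmod (q - (px, py))). split. lra.
  intros w Hw. apply (local_id G px py r rho); auto.
  - intros v H1 H2. apply HG; apply Rabs_le; simpl; lra.
  - pose proof (Cmod_triangle (w - q) (q - (px, py))). replace (w - q + (q - (px, py)))%C with (w - (px, py))%C in H by ring. lra.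
Qed.

Lemma Cmod_scal_R (t : R) (u : C) : Cmod (RtoC t * u)%C = Rabs t * Cmod u.
Proof. rewrite Cmod_mult, Cmod_R. auto. Qed.

Lemma segment G (a b : C) r : 0 < r ->
  (forall t, 0 <= t <= 1 -> forall w, Rabs (fst w - fst (a + RtoC t * (b - a))%C) <= r ->
     Rabs (snd w - snd (a + RtoC t * (b - a))%C) <= r -> Cdiff G w) ->
  Zset G a -> Zset G b.
Proof.
  intros Hr HG Ha.
  destruct (archimed_cor1 (r / (2 * (Cmod (b - a) + 1)))) as [n [Hn1 Hn2]].
  { apply Rdiv_lt_0_compat; [lra|]. pose proof (Cmod_ge_0 (b - a)). lra. }
  assert (HnR : 0 < INR n) by (apply lt_0_INR; auto).
  assert (Hstep : Cmod (b - a) / INR n < r / 2).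
  { pose proof (Cmod_ge_0 (b - a)).
    apply Rle_lt_trans with ((Cmod (b - a) + 1) * / INR n). unfold Rdiv.
    apply Rmult_le_compat_r. left; apply Rinv_0_lt_compat; auto. lra.
    apply (Rmult_lt_compat_l (Cmod (b - a) + 1)) in Hn1; [|lra].
    replace ((Cmod (b - a) + 1) * (r / (2 * (Cmod (b - a) + 1)))) with (r / 2) in Hn1 by (field; lra). lra. }
  set (P := fun k : nat => (a + RtoC (INR k / INR n) * (b - a))%C).
  assert (Hk : forall k, (k <= n)%nat -> Zset G (P k)).
  { induction k as [|k IH]; intros Hkn.
    - unfold P. replace (a + RtoC (INR 0 / INR n) * (b - a))%C with a; auto.
      simpl INR. replace (0 / INR n) with 0 by (field; lra). ring.
    - apply (propagate G (P k) (P (S k)) r); auto. apply IH; lia.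
      + intros w H1 H2. apply (HG (INR k / INR n)); auto.
        assert (INR k <= INR n) by (apply le_INR; lia). split.
        apply Rmult_le_pos. apply pos_INR. left; apply Rinv_0_lt_compat; auto.
        apply (Rmult_le_reg_r (INR n)); auto. unfold Rdiv. rewrite Rmult_assoc, Rinv_l by lra. lra.
      + unfold P. replace (a + RtoC (INR (S k) / INR n) * (b - a) - (a + RtoC (INR k / INR n) * (b - a)))%C
          with (RtoC (/ INR n) * (b - a))%C.
        rewrite Cmod_scal_R. rewrite Rabs_right. unfold Rdiv in Hstep. lra. left; apply Rinv_0_lt_compat; auto.
        rewrite S_INR. unfold Rdiv. rewrite Rmult_plus_distr_r, Rmult_1_l, RtoC_plus. ring. }
  specialize (Hk n (le_n n)). unfold P in Hk.
  replace (a + RtoC (INR n / INR n) * (b - a))%C with b in Hk; auto.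
  replace (INR n / INR n) with 1 by (field; lra). ring.
Qed.

Lemma seg_fst (a b : C) t : fst (a + RtoC t * (b - a))%C = fst a + t * (fst b - fst a).
Proof. destruct a, b. simpl. ring. Qed.
Lemma seg_snd (a b : C) t : snd (a + RtoC t * (b - a))%C = snd a + t * (snd b - snd a).
Proof. destruct a, b. simpl. ring. Qed.

Lemma abs_le_bt x y : Rabs x <= y -> - y <= x <= y.
Proof. intros H. pose proof (Rle_abs x). pose proof (Rle_abs (- x)). rewrite Rabs_Ropp in H1. lra. Qed.

Lemma global G : (forall w, w <> RtoC 1 -> w <> RtoC 2 -> Cdiff G w) ->
  (forall w, fst w > 9 -> G w = 0%C) -> forall s, s <> RtoC 1 -> s <> RtoC 2 -> G s = 0%C.
Proof.
  intros HG H9 s Hs1 Hs2.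
  assert (Hz : forall p, fst p > 10 -> Zset G p).
  { intros p Hp. exists 1. split. lra. intros w Hw. apply H9.
    pose proof (pr_fst w p). assert (Rabs (fst w - fst p) < 1) by lra. apply Rabs_def2 in H0. lra. }
  assert (Hsnd : forall w, snd w <> 0 -> Cdiff G w).
  { intros w Hw. apply HG; intro E; rewrite E in Hw; simpl in Hw; lra. }
  assert (Hfst : forall w, fst w <> 1 -> fst w <> 2 -> Cdiff G w).
  { intros w H1 H2. apply HG; intro E; rewrite E in *; simpl in *; lra. }
  enough (Zset G s) as [rho [Hrho H]] by (apply H; rewrite Cmod_sub_self; auto).
  destruct (Req_dec (snd s) 0) as [E|E].
  - assert (Hx1 : fst s <> 1). { intro E1. apply Hs1. destruct s; simpl in *; subst; auto. }
    assert (Hx2 : fst s <> 2). { intro E1. apply Hs2. destruct s; simpl in *; subst; auto. }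
    set (B := (fst s, 1)).
    assert (HB : Zset G B).
    { apply (segment G (Rabs (fst s) + 11, 1) B (1/2)). lra.
      - intros t Ht w H1 H2. apply Hsnd. rewrite seg_snd in H2. unfold B in H2. simpl in H2.
        apply abs_le_bt in H2. lra.
      - apply Hz. simpl. pose proof (Rabs_pos (fst s)). lra. }
    set (r := Rmin (Rabs (fst s - 1)) (Rabs (fst s - 2)) / 2).
    assert (Hr1 : 0 < Rabs (fst s - 1)) by (apply Rabs_pos_lt; lra).
    assert (Hr2 : 0 < Rabs (fst s - 2)) by (apply Rabs_pos_lt; lra).
    assert (Hr : 0 < r) by (unfold r; apply Rdiv_lt_0_compat; [apply Rmin_pos|]; lra).
    apply (segment G B s r Hr); auto.
    intros t Ht w H1 H2. rewrite seg_fst in H1. unfold B in H1; simpl in H1.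
    replace (fst s + t * (fst s - fst s)) with (fst s) in H1 by ring.
    apply Hfst.
    + intro E1. rewrite E1 in H1. assert (r < Rabs (fst s - 1)).
      { unfold r. pose proof (Rmin_l (Rabs (fst s - 1)) (Rabs (fst s - 2))). lra. }
      rewrite <- Rabs_Ropp in H1. replace (- (1 - fst s)) with (fst s - 1) in H1 by ring. lra.
    + intro E1. rewrite E1 in H1. assert (r < Rabs (fst s - 2)).
      { unfold r. pose proof (Rmin_r (Rabs (fst s - 1)) (Rabs (fst s - 2))). lra. }
      rewrite <- Rabs_Ropp in H1. replace (- (2 - fst s)) with (fst s - 2) in H1 by ring. lra.
  - assert (Hr : 0 < Rabs (snd s) / 2) by (apply Rdiv_lt_0_compat; [apply Rabs_pos_lt|]; lra).
    apply (segment G (Rabs (fst s) + 11, snd s) s (Rabs (snd s) / 2) Hr).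
    + intros t Ht w H1 H2. apply Hsnd. rewrite seg_snd in H2. simpl in H2.
      replace (snd s + t * (snd s - snd s)) with (snd s) in H2 by ring.
      intro E1. rewrite E1 in H2. rewrite <- Rabs_Ropp in H2. replace (- (0 - snd s)) with (snd s) in H2 by ring. lra.
    + apply Hz. simpl. pose proof (Rabs_pos (fst s)). lra.
Qed.

Definition cser (a : nat -> C) (l : C) := @is_series C_AbsRing C_NormedModule a l.

Fixpoint csum (f : nat -> C) (n : nat) : C := match n with O => 0%C | S n => (csum f n + f n)%C end.

Lemma sum_n_csum (f : nat -> C) n : @sum_n C_NormedModule f n = csum f (S n).
Proof. induction n. rewrite sum_O. simpl. ring. rewrite sum_Sn, IHn. simpl. reflexivity. Qed.

Lemma cser_eps a l : cser a l -> forall eps, 0 < eps -> exists N, forall n, (N <= n)%nat -> Cmod (csum a (S n) - l) < eps.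
Proof.
  intros H eps Heps. unfold cser, is_series in H.
  destruct (proj1 (filterlim_locally (sum_n a) l) H (mkposreal (eps / 2) ltac:(lra))) as [N HN].
  exists N. intros n Hn. specialize (HN n Hn). rewrite <- sum_n_csum.
  destruct HN as [H1 H2]. simpl in H1, H2.
  change (Rabs (fst (@sum_n (NormedModule.AbelianMonoid C_AbsRing C_NormedModule) a n) + - fst l) < eps / 2) in H1.
  change (Rabs (snd (@sum_n (NormedModule.AbelianMonoid C_AbsRing C_NormedModule) a n) + - snd l) < eps / 2) in H2.
  eapply Rle_lt_trans. apply Cmod_le_sum. unfold Rminus. lra.
Qed.

Lemma Cmod_zero_small (x : C) : (forall eps, 0 < eps -> Cmod x < eps) -> x = 0%C.
Proof. intros H. apply Cmod_eq_0. apply Rle_antisym; [|apply Cmod_ge_0].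
  destruct (Rle_dec (Cmod x) 0) as [h|h]; auto. specialize (H (Cmod x) ltac:(lra)). lra. Qed.

Lemma cser_unique a l l' : cser a l -> cser a l' -> l = l'.
Proof.
  intros H1 H2.
  assert (E : (l - l')%C = 0%C).
  { apply Cmod_zero_small. intros eps Heps.
    destruct (cser_eps a l H1 (eps/2) ltac:(lra)) as [N1 HN1].
    destruct (cser_eps a l' H2 (eps/2) ltac:(lra)) as [N2 HN2].
    specialize (HN1 (max N1 N2) ltac:(lia)). specialize (HN2 (max N1 N2) ltac:(lia)).
    rewrite Cmod_sub_sym in HN1.
    pose proof (Cmod_triangle (l - csum a (S (max N1 N2))) (csum a (S (max N1 N2)) - l')).
    replace (l - csum a (S (max N1 N2)) + (csum a (S (max N1 N2)) - l'))%C with (l - l')%C in H by ring. lra. }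
  apply (f_equal (fun x => x + l')%C) in E. rewrite Cplus_0_l in E. rewrite <- E. ring.
Qed.

Lemma cser_shift a l : cser a l -> cser (fun k => a (S k)) (l - a O)%C.
Proof. intros H. apply (@is_series_incr_1 C_AbsRing C_NormedModule). unfold cser in H.
  assert (E : @plus (NormedModule.AbelianMonoid C_AbsRing C_NormedModule) (l - a O)%C (a O) = l).
  { destruct l, (a O). apply injective_projections; simpl; ring. }
  rewrite E. exact H. Qed.

Lemma cser_scal c a l : cser a l -> cser (fun n => c * a n)%C (c * l)%C.
Proof. intros H. apply (@is_series_scal C_AbsRing C_NormedModule c a l H). Qed.

Lemma cser_ext a b l : (forall n, a n = b n) -> cser a l -> cser b l.
Proof. intros. apply (@is_series_ext C_AbsRing C_NormedModule a b l); auto. Qed.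

Lemma cser_bound a l B : cser a l -> (forall n, Cmod (csum a n) <= B) -> Cmod l <= B.
Proof.
  intros H HB. destruct (Rle_dec (Cmod l) B) as [h|h]; auto. exfalso.
  destruct (cser_eps a l H (Cmod l - B) ltac:(lra)) as [N HN].
  specialize (HN N (le_n N)). specialize (HB (S N)).
  pose proof (Cmod_triangle (csum a (S N)) (l - csum a (S N))).
  replace (csum a (S N) + (l - csum a (S N)))%C with l in H0 by ring.
  rewrite Cmod_sub_sym in HN. lra.
Qed.

Lemma npow_Cmod N s : Cmod (npow_neg N s) = exp (- Re s * ln (INR N)).
Proof.
  unfold npow_neg. rewrite Cmod_mult, Cmod_R, Rabs_right by (apply Rle_ge, Rlt_le, exp_pos).
  replace (Cmod (cos (Im s * ln (INR N)), - sin (Im s * ln (INR N)))) with 1. ring.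
  unfold Cmod; simpl. transitivity (sqrt 1). symmetry; apply sqrt_1. f_equal.
  pose proof (sin2_cos2 (Im s * ln (INR N))). unfold Rsqr in H. lra.
Qed.

Lemma exp_mono x y : x <= y -> exp x <= exp y.
Proof. intros [H|H]. left; apply exp_increasing; auto. subst; lra. Qed.

Lemma npow_bound N s : (1 <= N)%nat -> 4 <= Re s -> Cmod (npow_neg N s) <= / (INR N ^ 4).
Proof.
  intros HN Hs. rewrite npow_Cmod.
  assert (HN1 : 1 <= INR N) by (apply (le_INR 1); auto).
  assert (HL : 0 <= ln (INR N)) by (rewrite <- ln_1; apply ln_le; lra).
  eapply Rle_trans. apply exp_mono with (y := - (4 * ln (INR N))). nra.
  rewrite exp_Ropp. replace (4 * ln (INR N)) with (ln (INR N) + ln (INR N) + ln (INR N) + ln (INR N)) by ring.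
  rewrite !exp_plus, exp_ln by lra. right. f_equal. ring.
Qed.

Lemma npow_shift N s : (1 <= N)%nat ->
  npow_neg N (s + RtoC (INR 0))%C = (RtoC (INR N) * npow_neg N (s + RtoC (INR 1)))%C.
Proof.
  intros HN. assert (HN1 : 0 < INR N) by (apply lt_0_INR; lia).
  unfold npow_neg. simpl Re. simpl Im.
  rewrite Cmult_assoc, <- RtoC_mult. f_equal. f_equal.
  replace (- (fst s + 1) * ln (INR N)) with (- (fst s + 0) * ln (INR N) + - ln (INR N)) by ring.
  rewrite exp_plus, exp_Ropp, exp_ln by lra. field. lra.
Qed.

Lemma term_tel (K j : nat) :
  / INR (S K + S j) ^ 4 <= (/ (INR K + 1 + INR j) - / (INR K + 2 + INR j)) / (INR K + 1) ^ 2.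
Proof.
  assert (HK : 0 <= INR K) by apply pos_INR. assert (Hj : 0 <= INR j) by apply pos_INR.
  replace (INR (S K + S j)) with (INR K + 2 + INR j) by (rewrite plus_INR, !S_INR; ring).
  set (x := INR K) in *. set (y := INR j) in *.
  replace ((/ (x + 1 + y) - / (x + 2 + y)) / (x + 1) ^ 2) with (/ ((x + 1 + y) * (x + 2 + y) * (x + 1) ^ 2))
    by (field; lra).
  apply Rinv_le_contravar. apply Rmult_lt_0_compat. nra. apply pow_lt; lra.
  replace ((x + 2 + y) ^ 4) with ((x + 2 + y) * (x + 2 + y) * ((x + 2 + y) * (x + 2 + y))) by ring.
  apply Rmult_le_compat; try nra.
Qed.

Lemma tail_bound (f : nat -> C) l K : cser (fun j => f (S K + S j)%nat) l ->
  (forall N, (1 <= N)%nat -> Cmod (f N) <= / INR N ^ 4) -> Cmod l <= / (INR K + 1) ^ 3.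
Proof.
  intros Hs Hf. apply (cser_bound _ _ _ Hs). intros n.
  assert (HK : 0 <= INR K) by apply pos_INR.
  apply Rle_trans with ((/ (INR K + 1) - / (INR K + 1 + INR n)) / (INR K + 1) ^ 2).
  - induction n as [|n IH].
    + simpl. rewrite Cmod_0. right. field. lra.
    + simpl csum. eapply Rle_trans. apply Cmod_triangle.
      eapply Rle_trans. apply Rplus_le_compat. apply IH. eapply Rle_trans. apply Hf. lia. apply term_tel.
      right. rewrite S_INR. field. pose proof (pos_INR n). lra.
  - assert (0 < / (INR K + 1 + INR n)) by (apply Rinv_0_lt_compat; pose proof (pos_INR n); lra).
    unfold Rdiv. replace (/ (INR K + 1) ^ 3) with (/ (INR K + 1) * / (INR K + 1) ^ 2) by (field; lra).
    apply Rmult_le_compat_r. left; apply Rinv_0_lt_compat, pow_lt; lra. lra.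
Qed.

Lemma series_identity s v0 v1 : 4 <= Re s ->
  dz_series_value 0 s v0 -> dz_series_value 1 s v1 -> v0 = (RtoC 2 * v1)%C.
Proof.
  intros Hs [g0 [Hg0 Hv0]] [g1 [Hg1 Hv1]].
  set (phi := fun N => npow_neg N (s + RtoC (INR 0))%C).
  set (psi := fun N => npow_neg N (s + RtoC (INR 1))%C).
  assert (T0 : forall i j, dz_term 0 s i j = phi (S i + S j)%nat).
  { intros. unfold dz_term, phi. rewrite pow_O. apply Cmult_1_l. }
  assert (T1 : forall i j, dz_term 1 s i j = (RtoC (INR (S i)) * psi (S i + S j)%nat)%C).
  { intros. unfold dz_term, psi. rewrite pow_1. reflexivity. }
  assert (Hc : forall i, RtoC (INR (S i)) <> 0%C).
  { intros i E. apply RtoC_inj in E. pose proof (lt_0_INR (S i) ltac:(lia)). lra. }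
  set (u := fun i => (/ RtoC (INR (S i)) * g1 i)%C).
  assert (Hphi : forall i, cser (fun j => phi (S i + S j)%nat) (g0 i)).
  { intros i. eapply cser_ext; [|apply (Hg0 i)]. intros; apply T0. }
  assert (Hpsi : forall i, cser (fun j => psi (S i + S j)%nat) (u i)).
  { intros i. pose proof (cser_scal (/ RtoC (INR (S i))) _ _ (Hg1 i)) as Hs1. eapply cser_ext; [|apply Hs1].
    intros j. cbv beta. rewrite T1. field. apply Hc. }
  assert (Rec : forall (f : nat -> C) (g : nat -> C), (forall i, cser (fun j => f (S i + S j)%nat) (g i)) ->
     forall i, g i = (f (S i + S 0)%nat + g (S i))%C).
  { intros f g Hf i. pose proof (cser_shift _ _ (Hf i)) as H. cbv beta in H.
    assert (E : g (S i) = (g i - f (S i + S 0)%nat)%C).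
    { apply (cser_unique (fun j => f (S (S i) + S j)%nat)). apply Hf.
      eapply cser_ext; [|exact H]. intros j. cbv beta. f_equal. lia. }
    rewrite E. ring. }
  assert (Rec0 := Rec phi g0 Hphi). assert (Rec1 := Rec psi u Hpsi).
  assert (Hg1u : forall i, g1 i = (RtoC (INR (S i)) * u i)%C).
  { intros i. unfold u. field. apply Hc. }
  assert (Hsh : forall K, phi (S K + S 0)%nat = (RtoC (INR K + 2) * psi (S K + S 0)%nat)%C).
  { intros K. unfold phi, psi. rewrite npow_shift by lia. f_equal. f_equal.
    rewrite plus_INR, !S_INR. simpl. ring. }
  assert (HD : forall K, (csum g0 K - RtoC 2 * csum g1 K)%C =
      (RtoC (INR K) * g0 K - RtoC (INR K) * (RtoC (INR K) + 1) * u K)%C).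
  { induction K as [|K IH].
    - simpl. ring.
    - simpl csum. rewrite <- RtoC_plus in IH || idtac.
      replace (csum g0 K + g0 K - RtoC 2 * (csum g1 K + g1 K))%C
        with ((csum g0 K - RtoC 2 * csum g1 K) + g0 K - RtoC 2 * g1 K)%C by ring.
      rewrite IH. rewrite Hg1u. rewrite (Rec0 K), (Rec1 K), (Hsh K).
      rewrite S_INR, !RtoC_plus. ring. }
  assert (Re1 : 4 <= Re (s + RtoC (INR 0))%C) by (unfold Re in *; simpl; lra).
  assert (Re2 : 4 <= Re (s + RtoC (INR 1))%C) by (unfold Re in *; simpl; lra).
  assert (Bg0 : forall K, Cmod (g0 K) <= / (INR K + 1) ^ 3).
  { intros K. apply (tail_bound phi). apply Hphi. intros N HN. apply npow_bound; auto. }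
  assert (Bu : forall K, Cmod (u K) <= / (INR K + 1) ^ 3).
  { intros K. apply (tail_bound psi). apply Hpsi. intros N HN. apply npow_bound; auto. }
  assert (BD : forall K, Cmod (csum g0 K - RtoC 2 * csum g1 K)%C <= 2 / (INR K + 1)).
  { intros K. rewrite HD. assert (HK : 0 <= INR K) by apply pos_INR.
    eapply Rle_trans. apply Cmod_triangle. rewrite Cmod_opp, !Cmod_mult.
    replace (RtoC (INR K) + 1)%C with (RtoC (INR K + 1)) by (rewrite RtoC_plus; reflexivity).
    rewrite !Cmod_R, !Rabs_right by lra.
    pose proof (Bg0 K). pose proof (Bu K). pose proof (Cmod_ge_0 (g0 K)). pose proof (Cmod_ge_0 (u K)).
    apply Rle_trans with (INR K * / (INR K + 1) ^ 3 + INR K * (INR K + 1) * / (INR K + 1) ^ 3).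
    apply Rplus_le_compat. apply Rmult_le_compat_l; lra. apply Rmult_le_compat_l; nra.
    replace (2 / (INR K + 1)) with ((2 * (INR K + 1) * (INR K + 1)) * / (INR K + 1) ^ 3) by (field; lra).
    rewrite <- Rmult_plus_distr_r. apply Rmult_le_compat_r. left; apply Rinv_0_lt_compat, pow_lt; lra. nra. }
  assert (E : (v0 - RtoC 2 * v1)%C = 0%C).
  { apply Cmod_zero_small. intros eps Heps.
    destruct (cser_eps g0 v0 Hv0 (eps / 4) ltac:(lra)) as [N1 HN1].
    destruct (cser_eps g1 v1 Hv1 (eps / 4) ltac:(lra)) as [N2 HN2].
    destruct (archimed_cor1 (eps / 8) ltac:(lra)) as [N3 [HN3 HN3']].
    set (n := max N1 (max N2 N3)).
    specialize (HN1 n ltac:(unfold n; lia)). specialize (HN2 n ltac:(unfold n; lia)).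
    specialize (BD (S n)).
    assert (2 / (INR (S n) + 1) < eps / 4).
    { assert (INR N3 <= INR n) by (apply le_INR; unfold n; lia).
      assert (0 < INR N3) by (apply lt_0_INR; lia).
      rewrite S_INR. apply Rle_lt_trans with (2 / INR N3).
      unfold Rdiv. apply Rmult_le_compat_l. lra. apply Rinv_le_contravar; lra.
      unfold Rdiv. lra. }
    replace (v0 - RtoC 2 * v1)%C with ((csum g0 (S n) - RtoC 2 * csum g1 (S n)) - (csum g0 (S n) - v0) + RtoC 2 * (csum g1 (S n) - v1))%C by ring.
    eapply Rle_lt_trans. apply Cmod_triangle. rewrite Cmod_mult, Cmod_R, Rabs_right by lra.
    pose proof (Cmod_triangle (csum g0 (S n) - RtoC 2 * csum g1 (S n)) (- (csum g0 (S n) - v0))).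
    rewrite Cmod_opp in H0.
    replace (csum g0 (S n) - RtoC 2 * csum g1 (S n) + - (csum g0 (S n) - v0))%C
      with (csum g0 (S n) - RtoC 2 * csum g1 (S n) - (csum g0 (S n) - v0))%C in H0 by ring.
    lra. }
  apply (f_equal (fun x => x + RtoC 2 * v1)%C) in E. rewrite Cplus_0_l in E. rewrite <- E. ring.
Qed.

Theorem lemma3p1 (F0 F1 : C -> C)
  (H0 : is_dz_continuation 0 F0) (H1 : is_dz_continuation 1 F1)
  (s : C) (hs1 : s <> RtoC 1) (hs2 : s <> RtoC 2) :
  F0 s = Cmult (RtoC 2) (F1 s).
Proof.
  destruct H0 as [D0 S0], H1 as [D1 S1].
  set (G := fun w => (F0 w - RtoC 2 * F1 w)%C).
  assert (HG : G s = 0%C).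
  { apply global; auto.
    - intros w Hw1 Hw2. unfold G. apply Cdiff_minus. apply holo_Cdiff, D0; auto.
      apply (Cdiff_mult (fun _ => RtoC 2) F1). apply Cdiff_const. apply holo_Cdiff, D1; auto.
    - intros w Hw. unfold G. rewrite (series_identity w (F0 w) (F1 w)). ring.
      unfold Re; lra. apply S0. unfold Re; lra. apply S1. unfold Re; lra. }
  unfold G in HG. apply (f_equal (fun x => x + RtoC 2 * F1 s)%C) in HG.
  rewrite Cplus_0_l in HG. rewrite <- HG. ring.
Qed.
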